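(* Let $n\ge2$, let $\mathcal G_n$ be Houghton's group and $H_n=\mathrm{Stab}_{\mathcal G_n}((1,1))$. Then $H_n$ is finitely generated (indeed isomorphic to $\mathcal G_n$), $\mathcal G_n=H_n\cup H_ng_1H_n$, the Schreier coset graph $H_n\backslash\mathcal G_n$ (with respect to $S_n$) is a quasi-tree with $n$ ends and linear growth, and $H_n$ is not a virtual fiber subgroup of $\mathcal G_n$.
   Context: $X_n=\{1,\dots,n\}\times\mathbb N$. A bijection $f:X_n\to X_n$ is a translation at infinity if there are a finite $K\subseteq X_n$ and $a_1,\dots,a_n\in\mathbb Z$ with $f(i,m)=(i,m+a_i)$ for $(i,m)\notin K$; $\mathcal G_n$ is the group of all translations at infinity of $X_n$. For $i\ge1$, $g_i$ is the bijection of $\mathbb N\times\mathbb N$ given by $g_i(1,m)=(1,m-1)$ for $m>1$, $g_i(1,1)=(i+1,1)$, $g_i(i+1,m)=(i+1,m+1)$, and identity elsewhere; $\beta$ swaps $(1,1)$ and $(2,1)$ and fixes everything else. $S_n=\{g_1,\dots,g_{n-1}\}$ for $n\ge3$ and $S_2=\{g_1,\beta\}$; $S_n$ generates $\mathcal G_n$. $H$ is a virtual fiber subgroup if $H$ is finitely generated and there exist finite index $G'\le G$, $H'\le H$ with $H'\trianglelefteq G'$, $G'/H'\cong\mathbb Z$. *)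

(* Defs.v *)
(* concrete permutations of X_n = {1..n} x {1,2,...} as functions on nat*nat. *)
From Stdlib Require Import Arith ZArith List Lia Bool.
Import ListNotations.
Local Open Scope bool_scope.
Local Open Scope nat_scope.

Definition F : Type := nat * nat -> nat * nat.

Definition Xn (n : nat) (p : nat * nat) : Prop :=
  1 <= fst p <= n /\ 1 <= snd p.

Definition idF : F := fun p => p.
Definition comp (f g : F) : F := fun p => f (g p).

(** A bijection of X_n is represented by its extension by the identity
    outside X_n (this is a bijective correspondence). *)
Definition bij_Xn (n : nat) (f : F) : Prop :=
  (forall p, Xn n p -> Xn n (f p)) /\
  (forall p q, Xn n p -> Xn n q -> f p = f q -> p = q) /\
  (forall q, Xn n q -> exists p, Xn n p /\ f p = q) /\
  (forall p, ~ Xn n p -> f p = p).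

Definition transl_at_infinity (n : nat) (f : F) : Prop :=
  exists (K : list (nat * nat)) (a : nat -> Z),
    forall i m, 1 <= i <= n -> 1 <= m -> ~ In (i, m) K ->
      fst (f (i, m)) = i /\ Z.of_nat (snd (f (i, m))) = (Z.of_nat m + a i)%Z.

Definition Gn (n : nat) (f : F) : Prop := bij_Xn n f /\ transl_at_infinity n f.

Definition Hn (n : nat) (f : F) : Prop := Gn n f /\ f (1, 1) = (1, 1).

Definition gen_g (i : nat) : F := fun p =>
  let (a, m) := p in
  if (a =? 1) && (1 <? m) then (1, m - 1)
  else if (a =? 1) && (m =? 1) then (i + 1, 1)
  else if (a =? i + 1) && (1 <=? m) then (i + 1, m + 1)
  else p.

Definition beta : F := fun p =>
  if (fst p =? 1) && (snd p =? 1) then (2, 1)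
  else if (fst p =? 2) && (snd p =? 1) then (1, 1)
  else p.

Definition Sgen (n : nat) : list F :=
  if n =? 2 then [gen_g 1; beta] else map gen_g (seq 1 (n - 1)).

Inductive generated (L : list F) : F -> Prop :=
| gen_id : generated L idF
| gen_in : forall f, In f L -> generated L f
| gen_comp : forall f g, generated L f -> generated L g -> generated L (comp f g)
| gen_inv : forall f g, generated L f -> comp f g = idF -> comp g f = idF ->
            generated L g.

Definition fin_gen (A : F -> Prop) : Prop :=
  exists L : list F, (forall f, In f L -> A f) /\ (forall f, A f -> generated L f).

Definition is_subgroup (Big A : F -> Prop) : Prop :=
  (forall f, A f -> Big f) /\ A idF /\
  (forall f g, A f -> A g -> A (comp f g)) /\
  (forall f g, A f -> Big g -> comp f g = idF -> A g).

Definition finite_index (Big A : F -> Prop) : Prop :=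
  exists l : list F, (forall t, In t l -> Big t) /\
    forall g, Big g -> exists t h, In t l /\ A h /\ g = comp h t.

Definition normal_in (Big A : F -> Prop) : Prop :=
  forall g h, Big g -> A h -> exists h', A h' /\ comp g h = comp h' g.

Definition quotient_is_Z (Big A : F -> Prop) : Prop :=
  exists phi : F -> Z,
    (forall f g, Big f -> Big g -> phi (comp f g) = (phi f + phi g)%Z) /\
    (forall z, exists f, Big f /\ phi f = z) /\
    (forall f, Big f -> (phi f = 0%Z <-> A f)).

Definition virtual_fiber (G H : F -> Prop) : Prop :=
  fin_gen H /\
  exists G' H' : F -> Prop,
    is_subgroup G G' /\ finite_index G G' /\
    is_subgroup H H' /\ finite_index H H' /\
    (forall f, H' f -> G' f) /\ normal_in G' H' /\ quotient_is_Z G' H'.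

Definition group_iso (A B : F -> Prop) : Prop :=
  exists phi : F -> F,
    (forall f, A f -> B (phi f)) /\
    (forall f g, A f -> A g -> phi (comp f g) = comp (phi f) (phi g)) /\
    (forall f g, A f -> A g -> phi f = phi g -> f = g) /\
    (forall g, B g -> exists f, A f /\ phi f = g).

Inductive dist_le {V : Type} (E : V -> V -> Prop) : V -> V -> nat -> Prop :=
| dl_refl : forall x k, dist_le E x x k
| dl_step : forall x z y k, E x z -> dist_le E z y k -> dist_le E x y (S k).

Fixpoint chain {V : Type} (E : V -> V -> Prop) (l : list V) : Prop :=
  match l with
  | a :: ((b :: _) as t) => E a b /\ chain E t
  | _ => True
  end.

Definition is_tree {T : Type} (E : T -> T -> Prop) : Prop :=
  (forall x y, E x y -> E y x) /\ (forall x, ~ E x x) /\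
  (forall x y, exists k, dist_le E x y k) /\
  (forall (x : T) (l : list T), 2 <= length l -> NoDup (x :: l) ->
     chain E (x :: l) -> E (last l x) x -> False).

Definition quasi_isometric {V W : Type} (P : V -> Prop) (E : V -> V -> Prop)
  (Q : W -> Prop) (E' : W -> W -> Prop) : Prop :=
  exists (f : V -> W) (lam C : nat),
    (forall x, P x -> Q (f x)) /\
    (forall x y k, P x -> P y -> dist_le E x y k -> dist_le E' (f x) (f y) (lam * k + C)) /\
    (forall x y k, P x -> P y -> dist_le E' (f x) (f y) k -> dist_le E x y (lam * k + C)) /\
    (forall z, Q z -> exists x, P x /\ dist_le E' z (f x) C).

Definition quasi_tree {V : Type} (P : V -> Prop) (E : V -> V -> Prop) : Prop :=
  exists (T : Type) (ET : T -> T -> Prop),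
    is_tree ET /\ quasi_isometric P E (fun _ => True) ET.

Definition avoidE {V : Type} (E : V -> V -> Prop) (K : list V) : V -> V -> Prop :=
  fun a b => E a b /\ ~ In a K /\ ~ In b K.

Definition comp_of {V : Type} (E : V -> V -> Prop) (K : list V) (x y : V) : Prop :=
  ~ In x K /\ exists k, dist_le (avoidE E K) x y k.

Definition in_infinite_comp {V : Type} (P : V -> Prop) (E : V -> V -> Prop)
  (K : list V) (x : V) : Prop :=
  P x /\ ~ In x K /\ ~ (exists l : list V, forall y, comp_of E K x y -> In y l).

(** the graph has exactly e ends: sup over finite K of the number of
    infinite components of the complement of K equals e *)
Definition has_ends {V : Type} (P : V -> Prop) (E : V -> V -> Prop) (e : nat) : Prop :=
  (exists K : list V, (forall v, In v K -> P v) /\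
     exists xs : list V, length xs = e /\
       (forall x, In x xs -> in_infinite_comp P E K x) /\
       ForallOrdPairs (fun x y => ~ comp_of E K x y) xs) /\
  (forall K : list V, (forall v, In v K -> P v) ->
     forall xs : list V,
       (forall x, In x xs -> in_infinite_comp P E K x) ->
       ForallOrdPairs (fun x y => ~ comp_of E K x y) xs ->
       length xs <= e).

Definition linear_growth {V : Type} (E : V -> V -> Prop) (x0 : V) : Prop :=
  exists C : nat, forall r : nat,
    (exists l : list V, NoDup l /\ length l = S r /\ forall y, In y l -> dist_le E x0 y r) /\
    (forall l : list V, NoDup l -> (forall y, In y l -> dist_le E x0 y r) ->
       length l <= C * S r).

Definition coset (n : nat) (g : F) : F -> Prop :=
  fun f => exists h, Hn n h /\ f = comp h g.

Definition is_coset (n : nat) (C : F -> Prop) : Prop :=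
  exists g, Gn n g /\ C = coset n g.

Definition schreier (n : nat) (C D : F -> Prop) : Prop :=
  exists g s, Gn n g /\ In s (Sgen n) /\
    ((C = coset n g /\ D = coset n (comp g s)) \/
     (D = coset n g /\ C = coset n (comp g s))).

(* Main.v *)
Require Import Defs.
From Stdlib Require Import Arith ZArith List.
From Stdlib Require Import Lia Bool FunctionalExtensionality PropExtensionality Classical ClassicalEpsilon Permutation.
Import ListNotations.

Lemma dist_le_mono {V} (E : V -> V -> Prop) x y k k' :
  dist_le E x y k -> k <= k' -> dist_le E x y k'.
Proof.
  intros H; revert k'; induction H; intros k' Hk.
  - constructor.
  - destruct k' as [|k']; [lia|]. econstructor; eauto. apply IHdist_le; lia.
Qed.

Lemma dist_le_trans {V} (E : V -> V -> Prop) x y z k1 k2 :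
  dist_le E x y k1 -> dist_le E y z k2 -> dist_le E x z (k1 + k2).
Proof.
  intros H; induction H; intros H2.
  - eapply dist_le_mono; eauto; lia.
  - simpl. econstructor; eauto.
Qed.

Lemma dist_le_snoc {V} (E : V -> V -> Prop) x y z k :
  dist_le E x y k -> E y z -> dist_le E x z (S k).
Proof.
  intros H1 H2. replace (S k) with (k + 1) by lia.
  eapply dist_le_trans; eauto. econstructor; eauto. constructor.
Qed.

Lemma dist_le_sym {V} (E : V -> V -> Prop) x y k :
  (forall a b, E a b -> E b a) -> dist_le E x y k -> dist_le E y x k.
Proof.
  intros Hs H; induction H.
  - constructor.
  - eapply dist_le_snoc; eauto.
Qed.

Lemma dist_le_map {V W} (E : V -> V -> Prop) (E' : W -> W -> Prop) (f : V -> W) x y k :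
  (forall a b, E a b -> E' (f a) (f b)) -> dist_le E x y k -> dist_le E' (f x) (f y) k.
Proof.
  intros Hm H; induction H.
  - constructor.
  - econstructor; eauto.
Qed.

Lemma dist_le_weaken {V} (E E' : V -> V -> Prop) x y k :
  (forall a b, E a b -> E' a b) -> dist_le E x y k -> dist_le E' x y k.
Proof. intros. apply (dist_le_map E E' (fun v => v)); auto. Qed.

Lemma dist_le_loops {V} (E E' : V -> V -> Prop) x y k :
  (forall a b, E a b -> a = b \/ E' a b) -> dist_le E x y k -> dist_le E' x y k.
Proof.
  intros Hm H; induction H.
  - constructor.
  - destruct (Hm _ _ H) as [->|He].
    + eapply dist_le_mono; eauto.
    + econstructor; eauto.
Qed.

Lemma dist_transfer {V T} (c : T -> V) (EV : V -> V -> Prop) (ET : T -> T -> Prop)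
  (Q : T -> Prop) :
  (forall C D, EV C D -> exists a b, Q a /\ Q b /\ C = c a /\ D = c b /\ ET a b) ->
  (forall a b, Q a -> Q b -> c a = c b -> a = b) ->
  forall x y k, dist_le EV x y k -> forall a, Q a -> x = c a ->
    exists b, Q b /\ y = c b /\ dist_le ET a b k.
Proof.
  intros HE Hi x y k H; induction H; intros a Qa ->.
  - exists a; repeat split; auto. constructor.
  - destruct (HE _ _ H) as (a' & b & Qa' & Qb & E1 & E2 & Eab).
    apply Hi in E1; auto. subst a'.
    destruct (IHdist_le b Qb E2) as (b' & Qb' & -> & Hd).
    exists b'; repeat split; auto. econstructor; eauto.
Qed.

Definition box (n M : nat) : list (nat * nat) := list_prod (seq 1 n) (seq 1 M).

Lemma in_box n M i m : In (i, m) (box n M) <-> 1 <= i <= n /\ 1 <= m <= M.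
Proof.
  unfold box. rewrite in_prod_iff, !in_seq. lia.
Qed.

Lemma box_length n M : length (box n M) = n * M.
Proof. unfold box. rewrite length_prod, !length_seq. reflexivity. Qed.

Lemma NoDup_map_inj {A B} (f : A -> B) l :
  (forall x y, In x l -> In y l -> f x = f y -> x = y) -> NoDup l -> NoDup (map f l).
Proof.
  induction l; simpl; intros Hi Hn; constructor.
  - inversion Hn; subst. intros Hin. apply in_map_iff in Hin as (y & Hy & Hiny).
    assert (y = a) by (apply Hi; auto). subst; contradiction.
  - inversion Hn; subst. apply IHl; auto.
Qed.

Lemma NoDup_lprod {A B} (l1 : list A) (l2 : list B) :
  NoDup l1 -> NoDup l2 -> NoDup (list_prod l1 l2).
Proof.
  induction l1 as [|a l1 IH]; simpl; intros H1 H2; [constructor|].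
  inversion H1; subst. apply NoDup_app; auto.
  - apply NoDup_map_inj; auto. intros x y _ _ H; inversion H; auto.
  - intros x Hx Hx2. apply in_map_iff in Hx as (b & <- & _).
    apply in_prod_iff in Hx2 as [Ha _]. contradiction.
Qed.

Lemma box_NoDup n M : NoDup (box n M).
Proof. unfold box. apply NoDup_lprod; apply seq_NoDup. Qed.

Definition maxsnd (K : list (nat * nat)) : nat := fold_right (fun p acc => max (snd p) acc) 0 K.

Lemma maxsnd_spec K p : In p K -> snd p <= maxsnd K.
Proof. induction K; simpl; [tauto|]. intros [H|H]; subst; try lia. specialize (IHK H); lia. Qed.

Lemma in_ub_nat (f : nat -> nat) (l : list nat) :
  exists B, forall i, In i l -> f i <= B.
Proof.
  induction l as [|a l [B HB]].
  - exists 0; simpl; tauto.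
  - exists (max (f a) B). simpl; intros i [->|H]; [lia|]. specialize (HB i H); lia.
Qed.


Lemma bij_inj_all n f p q : bij_Xn n f -> f p = f q -> p = q.
Proof.
  intros (Hm & Hi & Hs & Ho) E.
  destruct (classic (Xn n p)) as [Xp|Xp]; destruct (classic (Xn n q)) as [Xq|Xq].
  - auto.
  - rewrite (Ho q Xq) in E. exfalso; apply Xq; rewrite <- E; auto.
  - rewrite (Ho p Xp) in E. exfalso; apply Xp; rewrite E; auto.
  - rewrite (Ho p Xp), (Ho q Xq) in E; auto.
Qed.

Lemma bij_surj_all n f q : bij_Xn n f -> exists p, f p = q.
Proof.
  intros (Hm & Hi & Hs & Ho).
  destruct (classic (Xn n q)) as [Xq|Xq].
  - destruct (Hs q Xq) as (p & _ & E); eauto.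
  - exists q; auto.
Qed.

Lemma bij_of_inv n f g :
  (forall p, Xn n p -> Xn n (f p)) -> (forall p, f (g p) = p) -> (forall p, g (f p) = p) ->
  (forall p, ~ Xn n p -> f p = p) -> bij_Xn n f.
Proof.
  intros Hm Hfg Hgf Ho. split; [auto|split; [|split; [|auto]]].
  - intros p0 q _ _ E. rewrite <- (Hgf p0), <- (Hgf q), E; auto.
  - intros q Xq. exists (g q); split; auto.
    destruct (classic (Xn n (g q))) as [H|H]; auto.
    assert (E := Hfg q). rewrite (Ho _ H) in E. rewrite E in H. contradiction.
Qed.

Definition EV (n : nat) (f : F) (a : nat -> Z) : Prop :=
  exists M, forall i m, 1 <= i <= n -> M < m ->
    fst (f (i, m)) = i /\ Z.of_nat (snd (f (i, m))) = (Z.of_nat m + a i)%Z.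

Lemma transl_EV n f : transl_at_infinity n f <-> exists a, EV n f a.
Proof.
  split.
  - intros (K & a & H). exists a, (maxsnd K). intros i m Hi Hm. apply H; try lia.
    intros Hin. apply maxsnd_spec in Hin. simpl in Hin. lia.
  - intros (a & M & H). exists (box n M), a. intros i m Hi Hm Hin.
    apply H; auto. destruct (le_lt_dec m M); auto. exfalso; apply Hin, in_box; lia.
Qed.

Lemma bound_Z n (a : nat -> Z) : exists B, forall i, 1 <= i <= n -> Z.abs_nat (a i) <= B.
Proof.
  destruct (in_ub_nat (fun i => Z.abs_nat (a i)) (seq 1 n)) as [B HB].
  exists B. intros i Hi. apply HB, in_seq; lia.
Qed.

Lemma EV_comp n f g a b : EV n f a -> EV n g b -> EV n (comp f g) (fun i => (a i + b i)%Z).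
Proof.
  intros (M1 & H1) (M2 & H2). destruct (bound_Z n b) as [B HB].
  exists (M1 + M2 + B). intros i m Hi Hm. unfold comp.
  destruct (H2 i m Hi ltac:(lia)) as [E1 E2].
  destruct (g (i, m)) as [i' m'] eqn:Eg. simpl in *. subst i'.
  specialize (HB i Hi).
  destruct (H1 i m' Hi) as [E3 E4]; [lia|]. split; auto. lia.
Qed.

Lemma Gn_comp n f g : Gn n f -> Gn n g -> Gn n (comp f g).
Proof.
  intros [Bf Tf] [Bg Tg]. split.
  - destruct Bf as (Hm1 & Hi1 & Hs1 & Ho1), Bg as (Hm2 & Hi2 & Hs2 & Ho2).
    unfold comp; split; [|split; [|split]].
    + intros p Xp; auto.
    + intros p q Xp Xq E. apply Hi2; auto; apply Hi1; auto.
    + intros q Xq. destruct (Hs1 q Xq) as (r & Xr & Er). destruct (Hs2 r Xr) as (p & Xp & Ep).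
      exists p; subst; auto.
    + intros p Xp. rewrite Ho2, Ho1; auto.
  - apply transl_EV in Tf as [a Ha]. apply transl_EV in Tg as [b Hb].
    apply transl_EV. eexists; apply EV_comp; eauto.
Qed.

Lemma Gn_inv n f : Gn n f -> exists g, Gn n g /\ comp f g = idF /\ comp g f = idF.
Proof.
  intros [Bf Tf].
  assert (Hs : forall q, exists p, f p = q) by (intros; eapply bij_surj_all; eauto).
  set (g := fun q => proj1_sig (constructive_indefinite_description _ (Hs q))).
  assert (Hfg : forall q, f (g q) = q).
  { intros q. unfold g. destruct (constructive_indefinite_description _ _); auto. }
  assert (Hgf : forall p, g (f p) = p).
  { intros p. apply (bij_inj_all n f); auto. }
  destruct Bf as (Hm & Hinj & Hs' & Ho).
  assert (Hgo : forall p, ~ Xn n p -> g p = p).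
  { intros p Xp. destruct (classic (Xn n (g p))) as [H|H].
    - apply Hm in H. rewrite Hfg in H. contradiction.
    - transitivity (f (g p)); [symmetry; apply Ho; auto | apply Hfg]. }
  assert (HgX : forall p, Xn n p -> Xn n (g p)).
  { intros p Xp. destruct (classic (Xn n (g p))) as [H|H]; auto.
    assert (E := Ho _ H); rewrite Hfg in E; rewrite <- E in H; contradiction. }
  exists g. split; [split|split].
  - apply (bij_of_inv n g f); auto.
  - apply transl_EV in Tf as [a [M Ha]]. apply transl_EV.
    destruct (bound_Z n a) as [B HB].
    exists (fun i => (- a i)%Z), (M + B). intros i m' Hi Hm'.
    specialize (HB i Hi).
    set (m := Z.to_nat (Z.of_nat m' - a i)).
    destruct (Ha i m Hi) as [E1 E2]; [lia|].
    destruct (f (i, m)) as [i1 m1] eqn:Ef. simpl in *. subst i1.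
    assert (m1 = m') by lia. subst m1.
    rewrite <- Ef, Hgf. simpl. split; auto. lia.
  - extensionality q; apply Hfg.
  - extensionality q; apply Hgf.
Qed.

Definition peq (p q : nat * nat) : bool := (fst p =? fst q) && (snd p =? snd q).
Definition swap (a b : nat * nat) : F := fun x =>
  if peq x a then b else if peq x b then a else x.

Ltac dstr := repeat match goal with
 | |- context [Nat.eqb ?a ?b] => destruct (Nat.eqb_spec a b)
 | |- context [Nat.ltb ?a ?b] => destruct (Nat.ltb_spec a b)
 | |- context [Nat.leb ?a ?b] => destruct (Nat.leb_spec a b)
 | H : context [Nat.eqb ?a ?b] |- _ => destruct (Nat.eqb_spec a b)
 | H : context [Nat.ltb ?a ?b] |- _ => destruct (Nat.ltb_spec a b)
 | H : context [Nat.leb ?a ?b] |- _ => destruct (Nat.leb_spec a b)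
 end.

Lemma pair_neq (a b c d : nat) : (a, b) <> (c, d) -> a <> c \/ b <> d.
Proof. intros H. destruct (Nat.eq_dec a c); [subst; right; congruence|left; auto]. Qed.
Lemma pair_neq_intro (a b c d : nat) : a <> c \/ b <> d -> (a, b) <> (c, d).
Proof. intros [H|H] E; inversion E; auto. Qed.

Ltac prs := repeat match goal with
 | H : (_, _) <> (_, _) |- _ => apply pair_neq in H
 | p : (nat * nat)%type |- _ => destruct p
 | H : (_, _) = (_, _) |- _ => injection H as; subst
 | H : _ /\ _ |- _ => destruct H
 end.

Ltac fin := first [ reflexivity | (apply pair_neq_intro; lia) | congruence | lia | (f_equal; lia) | (split; lia) | (intuition lia) | (intuition congruence) ].

Ltac crush0 := intros; repeat (progress (cbn [fst snd andb orb negb] in *; prs; dstr; subst)); try fin.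

Definition o : nat * nat := (1, 1).

Lemma peq_true p q : peq p q = true <-> p = q.
Proof. destruct p, q; unfold peq; simpl. rewrite andb_true_iff, !Nat.eqb_eq. split; intros H; [destruct H; subst; auto| injection H; auto]. Qed.

Lemma peq_spec p q : reflect (p = q) (peq p q).
Proof. apply iff_reflect. symmetry; apply peq_true. Qed.

Lemma swap_a a b : swap a b a = b.
Proof. unfold swap. destruct (peq_spec a a); congruence. Qed.
Lemma swap_b a b : swap a b b = a.
Proof. unfold swap. destruct (peq_spec b a); destruct (peq_spec b b); congruence. Qed.
Lemma swap_other a b x : x <> a -> x <> b -> swap a b x = x.
Proof. unfold swap. destruct (peq_spec x a); destruct (peq_spec x b); congruence. Qed.

Lemma swap_invol a b : comp (swap a b) (swap a b) = idF.
Proof.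
  extensionality x. unfold comp, idF.
  destruct (peq_spec x a); [subst; rewrite swap_a, swap_b; auto|].
  destruct (peq_spec x b); [subst; rewrite swap_b, swap_a; auto|].
  rewrite (swap_other a b x); auto. rewrite (swap_other a b x); auto.
Qed.

Lemma swap_same a : swap a a = idF.
Proof. extensionality x. unfold idF. destruct (peq_spec x a); [subst; apply swap_a|apply swap_other; auto]. Qed.

Lemma swap_comm a b : swap a b = swap b a.
Proof.
  extensionality x.
  destruct (peq_spec x a); [subst; rewrite swap_a, swap_b; auto|].
  destruct (peq_spec x b); [subst; rewrite swap_a, swap_b; auto|].
  rewrite (swap_other a b x), (swap_other b a x); auto.
Qed.

Lemma conj_swap t u a b : comp t u = idF -> comp u t = idF ->
  comp t (comp (swap a b) u) = swap (t a) (t b).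
Proof.
  intros H1 H2. extensionality x. unfold comp.
  assert (tu : forall y, t (u y) = y) by (intros y; exact (equal_f H1 y)).
  assert (ut : forall y, u (t y) = y) by (intros y; exact (equal_f H2 y)).
  destruct (peq_spec (u x) a) as [E|E].
  - rewrite E, swap_a. rewrite <- E, tu, swap_a. auto.
  - destruct (peq_spec (u x) b) as [E'|E'].
    + rewrite E', swap_b. rewrite <- E', tu. rewrite swap_b. auto.
    + rewrite swap_other; auto. rewrite tu. rewrite swap_other; auto.
      * intros ->. apply E; auto.
      * intros ->. apply E'; auto.
Qed.

Lemma Gn_swap n a b : Xn n a -> Xn n b -> Gn n (swap a b).
Proof.
  intros Xa Xb. split.
  - apply (bij_of_inv n _ (swap a b)).
    + intros x Xx. destruct (peq_spec x a); [subst; rewrite swap_a; auto|].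
      destruct (peq_spec x b); [subst; rewrite swap_b; auto|]. rewrite swap_other; auto.
    + intros x. exact (equal_f (swap_invol a b) x).
    + intros x. exact (equal_f (swap_invol a b) x).
    + intros x Xx. apply swap_other; intros ->; auto.
  - apply transl_EV. exists (fun _ => 0%Z), (snd a + snd b). intros i m Hi Hm.
    rewrite swap_other.
    + simpl; split; auto; lia.
    + intros E; subst; simpl in *; lia.
    + intros E; subst; simpl in *; lia.
Qed.

Definition gi (i : nat) : F := fun p => let (a, m) := p in
  if (a =? 1) && (1 <=? m) then (1, m + 1)
  else if (a =? i + 1) && (m =? 1) then (1, 1)
  else if (a =? i + 1) && (2 <=? m) then (i + 1, m - 1)
  else p.

Lemma gen_g_gi i p : 1 <= i -> gen_g i (gi i p) = p.
Proof. intros; destruct p as [a m]; unfold gen_g, gi; crush0. Qed.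
Lemma gi_gen_g i p : 1 <= i -> gi i (gen_g i p) = p.
Proof. intros; destruct p as [a m]; unfold gen_g, gi; crush0. Qed.

Lemma Gn_gen_g n i : 1 <= i -> i + 1 <= n -> Gn n (gen_g i).
Proof.
  intros H1 H2. split.
  - apply (bij_of_inv n _ (gi i)).
    + intros [a m]; unfold Xn, gen_g; crush0.
    + intros; apply gen_g_gi; auto.
    + intros; apply gi_gen_g; auto.
    + intros [a m]; unfold Xn, gen_g; crush0.
  - apply transl_EV. exists (fun j => if j =? 1 then (-1)%Z else if j =? i + 1 then 1%Z else 0%Z), 1.
    intros j m Hj Hm. unfold gen_g; crush0.
Qed.

Lemma Gn_beta n : 2 <= n -> Gn n beta.
Proof.
  intros H2. split.
  - apply (bij_of_inv n _ beta).
    + intros [a m]; unfold Xn, beta; crush0.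
    + intros [a m]; unfold beta; crush0.
    + intros [a m]; unfold beta; crush0.
    + intros [a m]; unfold Xn, beta; crush0.
  - apply transl_EV. exists (fun _ => 0%Z), 1.
    intros j m Hj Hm. unfold beta; crush0.
Qed.

Definition tt (i : nat) : F := fun p => let (a, m) := p in
  if (a =? 1) && (3 <=? m) then (1, m - 1)
  else if (a =? 1) && (m =? 2) then (i, 1)
  else if (a =? i) && (1 <=? m) then (i, m + 1)
  else p.

Definition uu (i : nat) : F := fun p => let (a, m) := p in
  if (a =? 1) && (2 <=? m) then (1, m + 1)
  else if (a =? i) && (m =? 1) then (1, 2)
  else if (a =? i) && (2 <=? m) then (i, m - 1)
  else p.

Lemma tt_uu i : 2 <= i -> comp (tt i) (uu i) = idF.
Proof. intros; extensionality p; destruct p as [a m]; unfold comp, idF, tt, uu; crush0. Qed.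
Lemma uu_tt i : 2 <= i -> comp (uu i) (tt i) = idF.
Proof. intros; extensionality p; destruct p as [a m]; unfold comp, idF, tt, uu; crush0. Qed.

Definition ea (i : nat) : nat -> Z := fun j => if j =? 1 then (-1)%Z else if j =? i then 1%Z else 0%Z.

Lemma EV_tt n i : 2 <= i -> EV n (tt i) (ea i).
Proof. intros; exists 2; intros j m Hj Hm; unfold tt, ea; crush0. Qed.

Lemma Gn_tt n i : 2 <= i <= n -> Gn n (tt i).
Proof.
  intros Hi. split.
  - apply (bij_of_inv n _ (uu i)).
    + intros [a m]; unfold Xn, tt; crush0.
    + intros p; exact (equal_f (tt_uu i ltac:(lia)) p).
    + intros p; exact (equal_f (uu_tt i ltac:(lia)) p).
    + intros [a m]; unfold Xn, tt; crush0.
  - apply transl_EV. exists (ea i). apply EV_tt; lia.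
Qed.

Lemma Hn_tt n i : 2 <= i <= n -> Hn n (tt i).
Proof. intros; split; [apply Gn_tt; auto|unfold tt; crush0]. Qed.

Fixpoint pw (f : F) (k : nat) : F := match k with 0 => idF | S k => comp f (pw f k) end.

Lemma pw_S' f k : pw f (S k) = comp (pw f k) f.
Proof. induction k; [reflexivity|]. change (comp f (pw f (S k)) = comp (comp f (pw f k)) f). rewrite IHk. reflexivity. Qed.

Lemma pw_inv f g k : comp f g = idF -> comp (pw f k) (pw g k) = idF.
Proof.
  intros H; induction k; [reflexivity|].
  rewrite (pw_S' g). change (comp f (comp (comp (pw f k) (pw g k)) g) = idF).
  rewrite IHk. exact H.
Qed.

Lemma pw_tt_12 i k : 2 <= i -> 1 <= k -> pw (tt i) k (1, 2) = (i, k).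
Proof.
  intros Hi Hk. induction k as [|k IH]; [lia|].
  destruct k as [|k].
  - simpl; unfold comp, tt, idF; crush0.
  - change (pw (tt i) (S (S k)) (1, 2)) with (tt i (pw (tt i) (S k) (1, 2))).
    rewrite IH by lia. unfold tt; crush0.
Qed.
Lemma pw_tt_i1 i k : 2 <= i -> pw (tt i) k (i, 1) = (i, k + 1).
Proof.
  intros Hi. induction k as [|k IH]; [reflexivity|].
  change (pw (tt i) (S k) (i, 1)) with (tt i (pw (tt i) k (i, 1))).
  rewrite IH. unfold tt; crush0.
Qed.
Lemma pw_uu_i1 i k : 2 <= i -> 1 <= k -> pw (uu i) k (i, 1) = (1, k + 1).
Proof.
  intros Hi Hk. induction k as [|k IH]; [lia|].
  destruct k as [|k].
  - simpl; unfold comp, uu, idF; crush0.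
  - change (pw (uu i) (S (S k)) (i, 1)) with (uu i (pw (uu i) (S k) (i, 1))).
    rewrite IH by lia. unfold uu; crush0.
Qed.
Lemma pw_uu_12 i k : 2 <= i -> pw (uu i) k (1, 2) = (1, k + 2).
Proof.
  intros Hi. induction k as [|k IH]; [reflexivity|].
  change (pw (uu i) (S k) (1, 2)) with (uu i (pw (uu i) k (1, 2))).
  rewrite IH. unfold uu; crush0.
Qed.

Lemma EV_id n : EV n idF (fun _ => 0%Z).
Proof. exists 0; intros i m _ _; unfold idF; simpl; split; [reflexivity|lia]. Qed.

Lemma EV_ext n f a b : (forall i, 1 <= i <= n -> a i = b i) -> EV n f a -> EV n f b.
Proof. intros He [M H]; exists M; intros i m Hi Hm. rewrite <- He; auto. Qed.

Lemma EV_pw n f a k : EV n f a -> EV n (pw f k) (fun j => (Z.of_nat k * a j)%Z).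
Proof.
  intros H. induction k.
  - eapply EV_ext; [|apply EV_id]. intros; simpl; ring.
  - eapply EV_ext; [|apply EV_comp; eauto]. intros; cbv beta; rewrite Nat2Z.inj_succ; ring.
Qed.

Lemma Hn_comp n f g : Hn n f -> Hn n g -> Hn n (comp f g).
Proof. intros [Gf Ef] [Gg Eg]; split; [apply Gn_comp; auto|unfold comp; rewrite Eg; auto]. Qed.

Lemma Hn_id n : Hn n idF.
Proof.
  split; [|reflexivity]. split.
  - apply (bij_of_inv n _ idF); unfold idF; auto.
  - apply transl_EV. eexists; apply EV_id.
Qed.

Lemma Hn_pw n f k : Hn n f -> Hn n (pw f k).
Proof. intros H; induction k; simpl; [apply Hn_id|apply Hn_comp; auto]. Qed.

Definition sg (i : nat) : F := swap (1, 2) (i, 1).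
Definition Lgen (n : nat) : list F := map tt (seq 2 (n - 1)) ++ map sg (seq 2 (n - 1)).

Section Gen.
Variable n : nat.
Hypothesis hn : 2 <= n.

Lemma Lgen_Hn f : In f (Lgen n) -> Hn n f.
Proof.
  unfold Lgen; rewrite in_app_iff, !in_map_iff.
  intros [(i & <- & Hi)|(i & <- & Hi)]; apply in_seq in Hi.
  - apply Hn_tt; lia.
  - split.
    + apply Gn_swap; unfold Xn; simpl; lia.
    + unfold sg; apply swap_other; intros E; inversion E; lia.
Qed.

Notation Gen := (generated (Lgen n)).

Lemma gen_tt i : 2 <= i <= n -> Gen (tt i).
Proof. intros; apply gen_in; unfold Lgen; apply in_app_iff; left; apply in_map, in_seq; lia. Qed.
Lemma gen_sg i : 2 <= i <= n -> Gen (sg i).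
Proof. intros; apply gen_in; unfold Lgen; apply in_app_iff; right; apply in_map, in_seq; lia. Qed.
Lemma gen_uu i : 2 <= i <= n -> Gen (uu i).
Proof. intros; apply (gen_inv _ (tt i)); [apply gen_tt; auto| apply tt_uu | apply uu_tt]; lia. Qed.
Lemma gen_pw f k : Gen f -> Gen (pw f k).
Proof. intros H; induction k; simpl; [apply gen_id|apply gen_comp; auto]. Qed.

Lemma gen_adj i k : 2 <= i <= n -> 1 <= k -> Gen (swap (i, k) (i, k + 1)).
Proof.
  intros Hi Hk. rewrite <- (pw_tt_12 i k), <- (pw_tt_i1 i k) by lia.
  rewrite <- (conj_swap _ (pw (uu i) k)).
  - apply gen_comp; [apply gen_pw, gen_tt; auto|apply gen_comp; [apply gen_sg; auto|apply gen_pw, gen_uu; auto]].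
  - apply pw_inv, tt_uu; lia.
  - apply pw_inv, uu_tt; lia.
Qed.

Lemma gen_adj1 k : 1 <= k -> Gen (swap (1, k + 1) (1, k + 2)).
Proof.
  intros Hk. rewrite swap_comm. rewrite <- (pw_uu_12 2 k), <- (pw_uu_i1 2 k) by lia.
  rewrite <- (conj_swap _ (pw (tt 2) k)).
  - apply gen_comp; [apply gen_pw, gen_uu; lia|apply gen_comp; [apply gen_sg; lia|apply gen_pw, gen_tt; lia]].
  - apply pw_inv, uu_tt; lia.
  - apply pw_inv, tt_uu; lia.
Qed.

Lemma sw_chain x y z : x <> y -> x <> z -> Gen (swap x y) -> Gen (swap y z) -> Gen (swap x z).
Proof.
  intros H1 H2 G1 G2.
  assert (E : comp (swap y z) (comp (swap x y) (swap y z)) = swap x z).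
  { rewrite conj_swap by apply swap_invol. rewrite swap_a, swap_other; auto. }
  rewrite <- E. repeat apply gen_comp; auto.
Qed.

Lemma gen_sw12 y : Xn n y -> y <> (1, 1) -> Gen (swap (1, 2) y).
Proof.
  destruct y as [a m]. unfold Xn; simpl. intros Hy Ho.
  destruct (Nat.eq_dec a 1) as [->|Ha].
  - assert (Hm : 2 <= m) by (destruct (Nat.eq_dec m 1); [subst; congruence|lia]).
    induction m as [|m IH]; [lia|].
    destruct (Nat.eq_dec m 1) as [->|Hm1]; [rewrite swap_same; apply gen_id|].
    destruct (Nat.eq_dec m 2) as [->|Hm2].
    + replace (1, 3) with (1, 1 + 2) by reflexivity. apply (gen_adj1 1); lia.
    + apply (sw_chain _ (1, m)).
      * intros E; inversion E; lia.
      * intros E; inversion E; lia.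
      * apply IH; try lia. intros E; inversion E; lia.
      * replace (1, m) with (1, (m - 1) + 1) by (f_equal; lia).
        replace (1, S m) with (1, (m - 1) + 2) by (f_equal; lia).
        apply gen_adj1; lia.
  - induction m as [|m IH]; [lia|].
    destruct m as [|m].
    + apply gen_sg; lia.
    + apply (sw_chain _ (a, S m)).
      * intros E; inversion E; lia.
      * intros E; inversion E; lia.
      * apply IH; try lia. intros E; inversion E; lia.
      * replace (a, S (S m)) with (a, S m + 1) by (f_equal; lia). apply gen_adj; lia.
Qed.

Lemma gen_sw x y : Xn n x -> Xn n y -> x <> (1, 1) -> y <> (1, 1) -> Gen (swap x y).
Proof.
  intros Xx Xy Hx Hy.
  destruct (peq_spec x (1, 2)) as [->|H1]; [apply gen_sw12; auto|].
  destruct (peq_spec y (1, 2)) as [->|H2]; [rewrite swap_comm; apply gen_sw12; auto|].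
  destruct (peq_spec x y) as [->|H3]; [rewrite swap_same; apply gen_id|].
  assert (E : comp (swap (1, 2) x) (comp (swap (1, 2) y) (swap (1, 2) x)) = swap x y).
  { rewrite conj_swap by apply swap_invol. rewrite swap_a, swap_other; auto. }
  rewrite <- E. repeat apply gen_comp; apply gen_sw12; auto.
Qed.
End Gen.

Lemma filter_le {A} (P Q : A -> bool) l :
  (forall y, In y l -> P y = true -> Q y = true) -> length (filter P l) <= length (filter Q l).
Proof.
  induction l as [|a l IH]; simpl; intros H; auto.
  destruct (P a) eqn:Pa.
  - rewrite (H a (or_introl eq_refl) Pa). simpl. apply le_n_S, IH; auto.
  - destruct (Q a); simpl; [apply le_S|]; apply IH; auto.
Qed.

Lemma filter_lt {A} (P Q : A -> bool) l x :
  (forall y, In y l -> P y = true -> Q y = true) -> In x l -> Q x = true -> P x = false ->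
  length (filter P l) < length (filter Q l).
Proof.
  induction l as [|a l IH]; simpl; intros H Hx Qx Px; [contradiction|].
  destruct Hx as [<-|Hx].
  - rewrite Px, Qx. simpl. apply le_n_S, filter_le; auto.
  - destruct (P a) eqn:Pa.
    + rewrite (H a (or_introl eq_refl) Pa). simpl. apply le_n_S, IH; auto.
    + destruct (Q a); simpl; [apply le_S|]; apply IH; auto.
Qed.

Definition mv (f : F) (p : nat * nat) : bool := negb (peq (f p) p).

Lemma mv_true f p : mv f p = true <-> f p <> p.
Proof. unfold mv. destruct (peq_spec (f p) p); simpl; split; congruence. Qed.

Section Fin.
Variable n : nat.
Hypothesis hn : 2 <= n.
Notation Gen := (generated (Lgen n)).

Lemma gen_finitary N : forall f, Hn n f -> (forall p, N < snd p -> f p = p) -> Gen f.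
Proof.
  set (B := box n N).
  assert (Main : forall c f, length (filter (mv f) B) <= c -> Hn n f ->
                 (forall p, N < snd p -> f p = p) -> Gen f).
  2:{ intros f; apply (Main _ f (le_n _)). }
  induction c as [|c IH]; intros f Hc Hf Hfin.
  all: destruct (classic (exists p, In p B /\ f p <> p)) as [(p & Hp & Hfp)|Hno].
  1: exfalso.
  - assert (length (filter (mv f) B) > 0); [|lia].
    destruct (filter (mv f) B) eqn:E; simpl; [|lia].
    assert (In p (filter (mv f) B)) by (apply filter_In; split; auto; apply mv_true; auto).
    rewrite E in H; contradiction.
  - assert (f = idF) as ->; [|apply gen_id].
    destruct Hf as [[Bf _] _]. extensionality x. unfold idF.
    destruct (classic (Xn n x)) as [Xx|Xx]; [|apply Bf; auto].
    destruct (le_lt_dec (snd x) N); [|apply Hfin; auto].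
    apply NNPP; intros Hne. apply Hno. exists x; split; auto.
    destruct x; apply in_box; unfold Xn in Xx; simpl in *; lia.
  - set (q := f p). set (t := swap p q).
    destruct Hf as [Gf Hfo]. pose proof Gf as [Bf _].
    assert (Xp : Xn n p) by (destruct p; apply in_box in Hp; unfold Xn; simpl; lia).
    assert (Xq : Xn n q) by (apply Bf; auto).
    assert (po : p <> (1, 1)) by (intros ->; contradiction).
    assert (qo : q <> (1, 1)).
    { intros E. apply po. apply (bij_inj_all n f); auto. unfold q in E; rewrite E, Hfo; auto. }
    assert (fix_ne : forall x, f x = x -> x <> p /\ x <> q).
    { intros x Ex; split; [intros ->; contradiction|].
      intros Exq. subst x. assert (Epq : q = p) by (apply (bij_inj_all n f); auto).
      apply Hfp. exact Epq. }
    assert (Ht : Hn n t).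
    { split; [apply Gn_swap; auto|]. apply swap_other; auto. }
    assert (Hf' : Hn n (comp t f)) by (apply Hn_comp; auto; split; auto).
    assert (Efix : forall x, f x = x -> comp t f x = x).
    { intros x Ex. unfold comp. rewrite Ex. destruct (fix_ne x Ex). apply swap_other; auto. }
    assert (Ef : f = comp t (comp t f)).
    { change (f = comp (comp t t) f). unfold t; rewrite swap_invol. reflexivity. }
    rewrite Ef. apply gen_comp; [apply gen_sw; auto|].
    apply IH.
    + assert (length (filter (mv (comp t f)) B) < length (filter (mv f) B)); [|lia].
      apply (filter_lt _ _ _ p); auto.
      * intros y _ Hy. apply mv_true. apply mv_true in Hy. intros E; apply Hy, Efix; auto.
      * apply mv_true; auto.
      * unfold mv, comp. fold q. unfold t. rewrite swap_b. destruct (peq_spec p p); auto; congruence.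
    + auto.
    + intros x Hx. apply Efix, Hfin; auto.
  - assert (f = idF) as ->; [|apply gen_id].
    destruct Hf as [[Bf _] _]. extensionality x. unfold idF.
    destruct (classic (Xn n x)) as [Xx|Xx]; [|apply Bf; auto].
    destruct (le_lt_dec (snd x) N); [|apply Hfin; auto].
    apply NNPP; intros Hne. apply Hno. exists x; split; auto.
    destruct x; apply in_box; unfold Xn in Xx; simpl in *; lia.
Qed.
End Fin.

Section SZ.
Variable n : nat.
Hypothesis hn : 2 <= n.
Notation Gen := (generated (Lgen n)).

Lemma NoDup_BE N d : NoDup (box n N ++ map (fun j => (1, N + j)) (seq 1 d)).
Proof.
  apply NoDup_app.
  - apply box_NoDup.
  - apply NoDup_map_inj; [|apply seq_NoDup]. intros x y _ _ E; inversion E; lia.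
  - intros [i m] H1 H2. apply in_box in H1. apply in_map_iff in H2 as (j & E & Hj).
    apply in_seq in Hj. inversion E; lia.
Qed.

Lemma sum_zero f a : Gn n f -> EV n f a -> (forall i, 2 <= i <= n -> a i = 0%Z) ->
  exists N, forall p, N < snd p -> f p = p.
Proof.
  intros [Bf _] [M HM] Ha.
  assert (a1 : a 1 = 0%Z).
  { destruct (Z.lt_trichotomy (a 1) 0) as [Hl|[He|Hg]]; auto; exfalso.
    - set (dn := Z.to_nat (- a 1)). set (N := M + dn).
      set (E := map (fun j => (1, N + j)) (seq 1 dn)).
      assert (Hnd : NoDup (map f (box n N ++ E))).
      { apply NoDup_map_inj; [|apply NoDup_BE]. intros; apply (bij_inj_all n f); auto. }
      assert (Hinc : incl (map f (box n N ++ E)) (box n N)).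
      { intros y Hy. apply in_map_iff in Hy as (x & <- & Hx). apply in_app_iff in Hx as [Hx|Hx].
        - destruct x as [i m]. pose proof Hx as Hx'. apply in_box in Hx.
          assert (Xfx : Xn n (f (i, m))) by (apply Bf; unfold Xn; simpl; lia).
          destruct (f (i, m)) as [i' m'] eqn:Efx. unfold Xn in Xfx; simpl in Xfx.
          apply in_box. split; [lia|]. split; [lia|].
          destruct (le_lt_dec m' N) as [|Hgt]; auto. exfalso.
          destruct (Nat.eq_dec i' 1) as [->|Hi'].
          + destruct (HM 1 (m' + dn)) as [E1 E2]; [lia|lia|].
            destruct (f (1, m' + dn)) as [i2 m2] eqn:Ef2. simpl in *.
            assert (m2 = m') by lia. subst.
            assert ((i, m) = (1, m' + dn)) by (apply (bij_inj_all n f); auto; congruence).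
            inversion H; lia.
          + destruct (HM i' m') as [E1 E2]; [lia|lia|].
            rewrite Ha in E2 by lia.
            destruct (f (i', m')) as [i2 m2] eqn:Ef2. simpl in *.
            assert (m2 = m') by lia. subst.
            assert ((i, m) = (i', m')) by (apply (bij_inj_all n f); auto; congruence).
            inversion H; lia.
        - apply in_map_iff in Hx as (j & <- & Hj). apply in_seq in Hj.
          destruct (HM 1 (N + j)) as [E1 E2]; [lia|lia|].
          destruct (f (1, N + j)) as [i2 m2] eqn:Ef2. simpl in *. subst.
          apply in_box; lia. }
      pose proof (NoDup_incl_length Hnd Hinc) as Hl2.
      rewrite length_map, length_app in Hl2. unfold E in Hl2. rewrite length_map, length_seq in Hl2. lia.
    - set (dn := Z.to_nat (a 1)). set (N := M).
      set (E := map (fun j => (1, N + j)) (seq 1 dn)).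
      assert (Hinc : incl (box n N ++ E) (map f (box n N))).
      { intros y Hy.
        assert (Xy : Xn n y).
        { apply in_app_iff in Hy as [Hy|Hy].
          - destruct y; apply in_box in Hy; unfold Xn; simpl; lia.
          - apply in_map_iff in Hy as (j & <- & Hj); apply in_seq in Hj; unfold Xn; simpl; lia. }
        destruct Bf as (_ & _ & Hs & _). destruct (Hs y Xy) as (x & Xx & <-).
        apply in_map_iff. exists x; split; auto.
        destruct x as [i m]. unfold Xn in Xx; simpl in Xx.
        destruct (le_lt_dec m N); [apply in_box; lia|exfalso].
        destruct (HM i m) as [E1 E2]; [lia|lia|].
        destruct (f (i, m)) as [i2 m2] eqn:Ef2. simpl in *. subst i2.
        apply in_app_iff in Hy as [Hy|Hy].
        + apply in_box in Hy. destruct (Nat.eq_dec i 1); [subst; lia|]. rewrite Ha in E2 by lia. lia.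
        + apply in_map_iff in Hy as (j & Ej & Hj). apply in_seq in Hj. inversion Ej; subst.
          unfold dn in *; lia. }
      pose proof (NoDup_incl_length (NoDup_BE N dn) Hinc) as Hl2.
      rewrite length_map, length_app in Hl2. unfold E in Hl2. rewrite length_map, length_seq in Hl2. lia. }
  exists M. intros [i m] Hm. simpl in Hm.
  destruct (classic (Xn n (i, m))) as [Xp|Xp]; [|destruct Bf as (_&_&_&Ho); apply Ho; auto].
  unfold Xn in Xp; simpl in Xp.
  destruct (HM i m) as [E1 E2]; [lia|lia|].
  assert (a i = 0%Z) by (destruct (Nat.eq_dec i 1); [subst; auto|apply Ha; lia]).
  destruct (f (i, m)) as [i2 m2]; simpl in *. subst. f_equal. lia.
Qed.

Lemma EV_uu i : 2 <= i -> EV n (uu i) (fun j => (- ea i j)%Z).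
Proof. intros; exists 2; intros j m Hj Hm; unfold uu, ea; crush0. Qed.

Lemma Hn_uu i : 2 <= i <= n -> Hn n (uu i).
Proof.
  intros Hi. split; [split|].
  - apply (bij_of_inv n _ (tt i)).
    + intros [a m]; unfold Xn, uu; crush0.
    + intros p; exact (equal_f (uu_tt i ltac:(lia)) p).
    + intros p; exact (equal_f (tt_uu i ltac:(lia)) p).
    + intros [a m]; unfold Xn, uu; crush0.
  - apply transl_EV. eexists. apply EV_uu; lia.
  - unfold uu; crush0.
Qed.

Lemma red_step (z : Z) r : 2 <= r <= n -> exists P Q, Gen P /\ Gen Q /\ Hn n P /\ comp Q P = idF /\
  EV n P (fun j => (- z * ea r j)%Z).
Proof.
  intros Hr. destruct (Z_le_gt_dec 0 z).
  - exists (pw (uu r) (Z.to_nat z)), (pw (tt r) (Z.to_nat z)). split; [|split; [|split; [|split]]].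
    + apply gen_pw, gen_uu; auto.
    + apply gen_pw, gen_tt; auto.
    + apply Hn_pw, Hn_uu; auto.
    + apply pw_inv, tt_uu; lia.
    + eapply EV_ext; [|apply EV_pw, EV_uu; lia]. intros; cbv beta. rewrite Z2Nat.id; lia.
  - exists (pw (tt r) (Z.to_nat (- z))), (pw (uu r) (Z.to_nat (- z))). split; [|split; [|split; [|split]]].
    + apply gen_pw, gen_tt; auto.
    + apply gen_pw, gen_uu; auto.
    + apply Hn_pw, Hn_tt; auto.
    + apply pw_inv, uu_tt; lia.
    + eapply EV_ext; [|apply EV_pw, EV_tt; lia]. intros; cbv beta. rewrite Z2Nat.id; lia.
Qed.

Lemma red R : forall f a, Hn n f -> EV n f a -> (forall i, 2 <= i <= n -> ~ In i R -> a i = 0%Z) -> Gen f.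
Proof.
  induction R as [|r R IH]; intros f a Hf Ef Ha.
  - destruct (sum_zero f a (proj1 Hf) Ef) as [N HN].
    + intros i Hi; apply Ha; auto.
    + apply (gen_finitary n hn N); auto.
  - destruct (classic (2 <= r <= n)) as [Hr|Hr].
    + destruct (red_step (a r) r Hr) as (P & Q & GP & GQ & HP & EQP & EP).
      assert (Ef' : f = comp Q (comp P f)) by (change (f = comp (comp Q P) f); rewrite EQP; reflexivity).
      rewrite Ef'. apply gen_comp; auto.
      apply (IH _ _ (Hn_comp _ _ _ HP Hf) (EV_comp _ _ _ _ _ EP Ef)).
      intros i Hi HiR. cbv beta. unfold ea.
      destruct (Nat.eq_dec i r) as [->|Hir].
      * rewrite (proj2 (Nat.eqb_neq r 1)) by lia. rewrite Nat.eqb_refl. ring.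
      * rewrite (proj2 (Nat.eqb_neq i 1)) by lia. rewrite (proj2 (Nat.eqb_neq i r)) by lia.
        assert (Hai : a i = 0%Z) by (apply Ha; auto; intros [E|E]; [lia|contradiction]).
        rewrite Hai. ring.
    + apply (IH f a); auto. intros i Hi HiR. apply Ha; auto. intros [E|E]; [subst; lia|contradiction].
Qed.

Theorem part_fin_gen : fin_gen (Hn n).
Proof.
  exists (Lgen n). split; [apply Lgen_Hn; auto|].
  intros f Hf. pose proof Hf as [[Bf Tf] Ho].
  apply transl_EV in Tf as [a Ea].
  apply (red (seq 2 (n - 1)) f a); auto.
  intros i Hi HiR. exfalso; apply HiR, in_seq; lia.
Qed.
End SZ.

Definition psi : F := fun p => let (a, m) := p in if (a =? 1) && (2 <=? m) then (1, m - 1) else p.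
Definition psu : F := fun p => let (a, m) := p in if (a =? 1) && (1 <=? m) then (1, m + 1) else p.
Definition phi (f : F) : F := comp psi (comp f psu).

Lemma psi_psu q : psi (psu q) = q.
Proof. destruct q as [a m]; unfold psi, psu; crush0. Qed.
Lemma psu_psi q : q <> (1, 1) -> psu (psi q) = q.
Proof. destruct q as [a m]; unfold psi, psu; crush0. Qed.
Lemma psu_ne q : psu q <> (1, 1).
Proof. destruct q as [a m]; unfold psu; crush0. Qed.

Section Iso.
Variable n : nat.
Hypothesis hn : 2 <= n.

Lemma Hn_ne f x : Hn n f -> x <> (1, 1) -> f x <> (1, 1).
Proof. intros [[Bf _] Ho] Hx E. apply Hx. apply (bij_inj_all n f); auto. congruence. Qed.

Lemma phi_hom f g : Hn n g -> phi (comp f g) = comp (phi f) (phi g).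
Proof.
  intros Hg. extensionality q. unfold phi, comp. rewrite psu_psi; auto. apply Hn_ne; auto. apply psu_ne.
Qed.

Lemma phi_id : phi idF = idF.
Proof. extensionality q. unfold phi, comp, idF. apply psi_psu. Qed.

Lemma X_psu q : Xn n q -> Xn n (psu q).
Proof. destruct q as [a m]; unfold Xn, psu; crush0. Qed.
Lemma X_psi q : Xn n q -> Xn n (psi q).
Proof. destruct q as [a m]; unfold Xn, psi; crush0. Qed.
Lemma psu_out q : ~ Xn n q -> psu q = q.
Proof. destruct q as [a m]; unfold Xn, psu; crush0. Qed.
Lemma psi_out q : ~ Xn n q -> psi q = q.
Proof. destruct q as [a m]; unfold Xn, psi; crush0. Qed.

Lemma Hn_inv f : Hn n f -> exists g, Hn n g /\ comp f g = idF /\ comp g f = idF.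
Proof.
  intros [Gf Ho]. destruct (Gn_inv n f Gf) as (g & Gg & E1 & E2).
  exists g; split; [split; [exact Gg|]|split; auto].
  assert (E := equal_f E2 (1, 1)). unfold comp, idF in E. rewrite Ho in E. auto.
Qed.

Lemma phi_Gn f : Hn n f -> Gn n (phi f).
Proof.
  intros Hf. destruct (Hn_inv f Hf) as (g & Hg & E1 & E2).
  pose proof Hf as [[Bf Tf] Ho].
  split.
  - apply (bij_of_inv n _ (phi g)).
    + intros q Xq. unfold phi, comp. apply X_psi, Bf, X_psu; auto.
    + intros q. assert (E := phi_hom f g Hg). rewrite E1, phi_id in E. exact (eq_sym (equal_f E q)).
    + intros q. assert (E := phi_hom g f Hf). rewrite E2, phi_id in E. exact (eq_sym (equal_f E q)).
    + intros q Xq. unfold phi, comp. rewrite psu_out by auto. destruct Bf as (_&_&_&Bo).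
      rewrite Bo by auto. apply psi_out; auto.
  - apply transl_EV in Tf as [a [M HM]]. apply transl_EV. exists a.
    destruct (bound_Z n a) as [B HB]. exists (M + B + 2). intros i m Hi Hm.
    specialize (HB i Hi). unfold phi, comp.
    destruct (Nat.eq_dec i 1) as [->|Hi1].
    + replace (psu (1, m)) with (1, m + 1) by (unfold psu; crush0).
      destruct (HM 1 (m + 1)) as [E3 E4]; [lia|lia|].
      destruct (f (1, m + 1)) as [i' m']; cbn [fst snd] in *; subst.
      unfold psi; crush0.
    + replace (psu (i, m)) with (i, m) by (unfold psu; crush0).
      destruct (HM i m) as [E3 E4]; [lia|lia|].
      destruct (f (i, m)) as [i' m']; cbn [fst snd] in *; subst.
      unfold psi; crush0.
Qed.

Lemma phi_inj f g : Hn n f -> Hn n g -> phi f = phi g -> f = g.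
Proof.
  intros Hf Hg E. extensionality p.
  destruct (peq_spec p (1, 1)) as [->|Hp]; [rewrite (proj2 Hf), (proj2 Hg); auto|].
  rewrite <- (psu_psi p Hp).
  assert (E' := equal_f E (psi p)). unfold phi, comp in E'.
  rewrite <- (psu_psi (f (psu (psi p)))), <- (psu_psi (g (psu (psi p)))), E'; auto;
    apply Hn_ne; auto; apply psu_ne.
Qed.

Definition pinv (g : F) : F := fun q => if peq q (1, 1) then (1, 1) else psu (g (psi q)).

Lemma pinv_o g : pinv g (1, 1) = (1, 1).
Proof. unfold pinv. destruct (peq_spec (1,1) (1,1)); congruence. Qed.
Lemma pinv_ne g q : q <> (1, 1) -> pinv g q = psu (g (psi q)).
Proof. intros H; unfold pinv. destruct (peq_spec q (1,1)); congruence. Qed.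

Lemma pinv_comp g h : comp g h = idF -> comp (pinv g) (pinv h) = idF.
Proof.
  intros E. extensionality q. unfold comp, idF.
  destruct (peq_spec q (1, 1)) as [->|Hq]; [rewrite !pinv_o; auto|].
  rewrite (pinv_ne h q Hq), pinv_ne by apply psu_ne. rewrite psi_psu.
  assert (E' := equal_f E (psi q)). unfold comp, idF in E'. rewrite E'. apply psu_psi; auto.
Qed.

Lemma phi_surj g : Gn n g -> exists f, Hn n f /\ phi f = g.
Proof.
  intros Gg. destruct (Gn_inv n g Gg) as (h & Gh & E1 & E2).
  pose proof Gg as [Bg Tg]. pose proof Gh as [Bh _].
  exists (pinv g). split; [split; [split|]|].
  - apply (bij_of_inv n _ (pinv h)).
    + intros q Xq. destruct (peq_spec q (1, 1)) as [->|Hq]; [rewrite pinv_o; auto|].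
      rewrite pinv_ne by auto. apply X_psu, Bg, X_psi; auto.
    + intros q; exact (equal_f (pinv_comp g h E1) q).
    + intros q; exact (equal_f (pinv_comp h g E2) q).
    + intros q Xq. rewrite pinv_ne by (intros ->; apply Xq; unfold Xn; simpl; lia).
      rewrite psi_out by auto. destruct Bg as (_&_&_&Bo). rewrite Bo by auto. apply psu_out; auto.
  - apply transl_EV in Tg as [a [M HM]]. apply transl_EV. exists a.
    destruct (bound_Z n a) as [B HB]. exists (M + B + 2). intros i m Hi Hm.
    specialize (HB i Hi). rewrite pinv_ne by (intros E; inversion E; lia).
    destruct (Nat.eq_dec i 1) as [->|Hi1].
    + replace (psi (1, m)) with (1, m - 1) by (unfold psi; crush0).
      destruct (HM 1 (m - 1)) as [E3 E4]; [lia|lia|].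
      destruct (g (1, m - 1)) as [i' m']; cbn [fst snd] in *; subst.
      unfold psu; crush0.
    + replace (psi (i, m)) with (i, m) by (unfold psi; crush0).
      destruct (HM i m) as [E3 E4]; [lia|lia|].
      destruct (g (i, m)) as [i' m']; cbn [fst snd] in *; subst.
      unfold psu; crush0.
  - apply pinv_o.
  - extensionality q. unfold phi, comp. rewrite pinv_ne by apply psu_ne. rewrite !psi_psu. auto.
Qed.

Theorem part_iso : group_iso (Hn n) (Gn n).
Proof.
  exists phi. split; [|split; [|split]].
  - apply phi_Gn.
  - intros f g Hf Hg. apply phi_hom; auto.
  - apply phi_inj.
  - apply phi_surj.
Qed.
End Iso.

Section DC.
Variable n : nat.
Hypothesis hn : 2 <= n.

Theorem part_dc f : Gn n f ->
  Hn n f \/ exists h1 h2, Hn n h1 /\ Hn n h2 /\ f = comp h1 (comp (gen_g 1) h2).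
Proof.
  intros Gf. destruct (peq_spec (f (1, 1)) (1, 1)) as [E|E]; [left; split; auto|right].
  pose proof Gf as [Bf _]. pose proof Bf as (Hm & Hi & Hs & Ho).
  destruct (Hs (1, 1)) as (x & Xx & Ex); [unfold Xn; simpl; lia|].
  assert (xo : x <> (1, 1)) by (intros ->; contradiction).
  assert (G1 : Gn n (gen_g 1)) by (apply Gn_gen_g; lia).
  destruct (Gn_inv n _ G1) as (gv & Gv & E1 & E2).
  assert (gvo : gv (1, 1) = (1, 2)).
  { assert (H := equal_f E2 (1, 2)). unfold comp, idF in H. rewrite <- H. reflexivity. }
  set (h2 := swap (1, 2) x).
  assert (Hh2 : Hn n h2).
  { split; [apply Gn_swap; auto; unfold Xn; simpl; lia|]. apply swap_other; auto. intros Ee; inversion Ee. }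
  exists (comp f (comp h2 gv)), h2. split; [split|split; [auto|]].
  - apply Gn_comp; auto. apply Gn_comp; auto. apply Hh2.
  - unfold comp. rewrite gvo. unfold h2. rewrite swap_a. auto.
  - change (f = comp f (comp h2 (comp (comp gv (gen_g 1)) h2))). rewrite E2.
    change (f = comp f (comp h2 h2)). unfold h2. rewrite swap_invol. reflexivity.
Qed.

Definition cc (p : nat * nat) : F -> Prop := fun f => Gn n f /\ f p = (1, 1).

Lemma coset_char g x : Gn n g -> g x = (1, 1) -> coset n g = cc x.
Proof.
  intros Gg Ex. extensionality f. apply propositional_extensionality. split.
  - intros (h & [Gh Ho] & ->). split; [apply Gn_comp; auto|]. unfold comp; rewrite Ex; auto.
  - intros [Gf Ef]. destruct (Gn_inv n g Gg) as (gv & Gv & E1 & E2).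
    exists (comp f gv). split; [split|].
    + apply Gn_comp; auto.
    + unfold comp. rewrite <- Ex. assert (H := equal_f E2 x). unfold comp, idF in H. rewrite H; congruence.
    + change (f = comp f (comp gv g)). rewrite E2. reflexivity.
Qed.

Definition gsw (p : nat * nat) : F := swap p (1, 1).

Lemma Gn_gsw p : Xn n p -> Gn n (gsw p).
Proof. intros; apply Gn_swap; auto; unfold Xn; simpl; lia. Qed.

Lemma cc_coset p : Xn n p -> coset n (gsw p) = cc p.
Proof. intros Xp. apply coset_char; [apply Gn_gsw; auto|apply swap_a]. Qed.

Lemma is_coset_iff C : is_coset n C <-> exists p, Xn n p /\ C = cc p.
Proof.
  split.
  - intros (g & Gg & ->). pose proof Gg as [[_ [_ [Hs _]]] _].
    destruct (Hs (1, 1)) as (x & Xx & Ex); [unfold Xn; simpl; lia|].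
    exists x; split; auto. apply coset_char; auto.
  - intros (p & Xp & ->). exists (gsw p); split; [apply Gn_gsw; auto|]. symmetry; apply cc_coset; auto.
Qed.



Lemma cc_inj p q : Xn n p -> cc p = cc q -> p = q.
Proof.
  intros Xp E.
  assert (H : cc p (gsw p)) by (split; [apply Gn_gsw; auto|apply swap_a]).
  rewrite E in H. destruct H as [_ H]. unfold gsw in H.
  destruct (peq_spec q p) as [->|H1]; auto.
  destruct (peq_spec q (1, 1)) as [->|H2].
  - rewrite swap_b in H. auto.
  - rewrite swap_other in H; auto. contradiction.
Qed.

Lemma coset_id : coset n idF = cc (1, 1).
Proof.
  apply coset_char; auto. split.
  - apply (bij_of_inv n _ idF); unfold idF; auto.
  - apply transl_EV. exists (fun _ => 0%Z), 0. intros; unfold idF; simpl; split; auto; lia.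
Qed.

Definition Ep (p q : nat * nat) : Prop :=
  Xn n p /\ Xn n q /\ exists s, In s (Sgen n) /\ (s q = p \/ s p = q).

Lemma Sgen_Gn s : In s (Sgen n) -> Gn n s.
Proof.
  unfold Sgen. destruct (Nat.eqb_spec n 2) as [->|Hn2].
  - simpl. intros [<-|[<-|[]]]; [apply Gn_gen_g; lia|apply Gn_beta; lia].
  - intros H. apply in_map_iff in H as (i & <- & Hi). apply in_seq in Hi. apply Gn_gen_g; lia.
Qed.

Lemma schreier_iff C D : schreier n C D <-> exists p q, C = cc p /\ D = cc q /\ Ep p q.
Proof.
  split.
  - intros (g & s & Gg & Hs & HCD).
    pose proof (Sgen_Gn s Hs) as Gs.
    pose proof Gg as [[Hm [_ [Hsu _]]] _].
    destruct (Hsu (1, 1)) as (x & Xx & Ex); [unfold Xn; simpl; lia|].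
    pose proof Gs as [[Hm2 [_ [Hsu2 _]]] _].
    destruct (Hsu2 x Xx) as (y & Xy & Ey).
    assert (E1 : coset n g = cc x) by (apply coset_char; auto).
    assert (E2 : coset n (comp g s) = cc y) by (apply coset_char; [apply Gn_comp; auto|unfold comp; rewrite Ey; auto]).
    destruct HCD as [[-> ->]|[-> ->]].
    + exists x, y. split; [auto|split; [auto|]]. split; [auto|split; [auto|]]. exists s; split; auto.
    + exists y, x. split; [auto|split; [auto|]]. split; [auto|split; [auto|]]. exists s; split; auto.
  - intros (p & q & -> & -> & Xp & Xq & s & Hs & [Esq|Esp]).
    + exists (gsw p), s. split; [apply Gn_gsw; auto|]. split; auto. left. split.
      * symmetry; apply cc_coset; auto.
      * symmetry; apply coset_char; [apply Gn_comp; [apply Gn_gsw; auto|apply Sgen_Gn; auto]|].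
        unfold comp; rewrite Esq; apply swap_a.
    + exists (gsw q), s. split; [apply Gn_gsw; auto|]. split; auto. right. split.
      * symmetry; apply cc_coset; auto.
      * symmetry; apply coset_char; [apply Gn_comp; [apply Gn_gsw; auto|apply Sgen_Gn; auto]|].
        unfold comp; rewrite Esp; apply swap_a.
Qed.
End DC.

Lemma last_cons {A} (l : list A) a c : last (c :: l) a = last l c.
Proof.
  revert a c; induction l as [|d l IH]; intros a c; [reflexivity|].
  change (last (c :: d :: l) a) with (last (d :: l) a). rewrite !IH. reflexivity.
Qed.

Lemma last_snoc {A} (l : list A) a d : last (l ++ [a]) d = a.
Proof. revert d; induction l as [|b l IH]; intros d; [reflexivity|]. simpl app. rewrite last_cons. apply IH. Qed.

Lemma last_In {A} (l : list A) d : l <> [] -> In (last l d) l.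
Proof.
  induction l as [|b l IH]; [congruence|]. intros _. rewrite last_cons.
  destruct l as [|c l]; [left; reflexivity|]. right. rewrite <- last_cons with (a := d). apply IH; congruence.
Qed.

Lemma chain_cons2 {V} (E : V -> V -> Prop) a b t : chain E (a :: b :: t) <-> E a b /\ chain E (b :: t).
Proof. apply iff_refl. Qed.

Lemma chain_snoc {V} (E : V -> V -> Prop) l a b :
  chain E (a :: l ++ [b]) <-> chain E (a :: l) /\ E (last l a) b.
Proof.
  revert a; induction l as [|c l IH]; intros a.
  - simpl; tauto.
  - rewrite <- app_comm_cons. rewrite !chain_cons2. rewrite IH. rewrite (last_cons l a c). tauto.
Qed.

Definition Cyc {V} (E : V -> V -> Prop) (w : list V) : Prop :=
  match w with [] => True | a :: l => chain E (a :: l ++ [a]) end.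

Lemma Cyc_rot1 {V} (E : V -> V -> Prop) a l : Cyc E (a :: l) -> Cyc E (l ++ [a]).
Proof.
  destruct l as [|c l]; [simpl; auto|]. unfold Cyc. simpl app.
  intros [Hac Hc]. apply chain_snoc. split; auto. rewrite last_snoc; auto.
Qed.

Lemma Cyc_rot {V} (E : V -> V -> Prop) a b : Cyc E (a ++ b) -> Cyc E (b ++ a).
Proof.
  revert b; induction a as [|x a IH]; intros b H.
  - rewrite app_nil_r; auto.
  - apply Cyc_rot1 in H. rewrite <- app_assoc in H. apply IH in H.
    rewrite <- app_assoc in H. exact H.
Qed.

Lemma list_max {V} (dep : V -> nat) (l : list V) x : exists y, In y (x :: l) /\ forall z, In z (x :: l) -> dep z <= dep y.
Proof.
  induction l as [|a l IH].
  - exists x; split; [left; auto|]. intros z [<-|[]]; auto.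
  - destruct IH as (y & Hy & Hmax).
    destruct (le_lt_dec (dep a) (dep y)).
    + exists y; split; [destruct Hy as [<-|Hy]; [left|right; right]; auto|].
      intros z Hz; destruct Hz as [Hz|[Hz|Hz]].
      * subst; apply Hmax; left; auto.
      * subst; lia.
      * apply Hmax; right; auto.
    + exists a; split; [right; left; auto|].
      intros z Hz; destruct Hz as [Hz|[Hz|Hz]].
      * subst z; specialize (Hmax x (or_introl eq_refl)); lia.
      * subst; lia.
      * specialize (Hmax z (or_intror Hz)); lia.
Qed.

Section GTree.
Variables (T : Type) (r : T) (par : T -> T) (dep : T -> nat).
Hypothesis Hpd : forall p, p <> r -> dep (par p) + 1 = dep p.

Definition ETg (p q : T) : Prop := (p <> r /\ q = par p) \/ (q <> r /\ p = par q).

Lemma ETg_sym p q : ETg p q -> ETg q p.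
Proof. unfold ETg; tauto. Qed.

Lemma conn_root k : forall p, dep p <= k -> dist_le ETg p r k.
Proof.
  induction k as [|k IH]; intros p Hp.
  - destruct (classic (p = r)) as [->|Hr]; [constructor|]. specialize (Hpd p Hr); lia.
  - destruct (classic (p = r)) as [->|Hr]; [constructor|].
    apply dl_step with (par p); [left; auto|]. apply IH. specialize (Hpd p Hr); lia.
Qed.

Lemma gtree : is_tree ETg.
Proof.
  split; [exact ETg_sym|split; [|split]].
  - intros x [[Hx E]|[Hx E]]; specialize (Hpd x Hx); rewrite <- E in Hpd; lia.
  - intros x y. exists (dep x + dep y).
    apply dist_le_trans with r; [apply conn_root; auto|].
    apply dist_le_sym; [exact ETg_sym|apply conn_root; auto].
  - intros x l Hlen Hnd Hch Hcl.
    assert (Hc : Cyc ETg (x :: l)) by (apply chain_snoc; auto).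
    destruct (list_max dep l x) as (y & Hy & Hmax).
    destruct (in_split _ _ Hy) as (a & b & Eab).
    rewrite Eab in Hc, Hnd. apply Cyc_rot in Hc. simpl app in Hc.
    assert (Hnd' : NoDup (y :: b ++ a)).
    { apply (Permutation_NoDup (l := a ++ y :: b)); auto.
      apply (Permutation_app_comm a (y :: b)). }
    assert (Hlen' : length (b ++ a) >= 2).
    { assert (length (x :: l) = length (a ++ y :: b)) by (rewrite Eab; auto).
      rewrite length_app in *. simpl in *. lia. }
    assert (Hin : forall z, In z (b ++ a) -> dep z <= dep y).
    { intros z Hz. apply Hmax. rewrite Eab. apply in_app_iff in Hz. apply in_app_iff. simpl. tauto. }
    destruct (b ++ a) as [|z m'] eqn:Em; [simpl in Hlen'; lia|].
    assert (Hm' : m' <> []) by (intros ->; simpl in Hlen'; lia).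
    unfold Cyc in Hc. simpl app in Hc. destruct Hc as [Eyz Hc].
    apply chain_snoc in Hc as [_ Ewy].
    assert (Hz1 : z = par y).
    { destruct Eyz as [[_ E]|[Hz E]]; auto.
      specialize (Hpd z Hz). specialize (Hin z (or_introl eq_refl)). rewrite <- E in Hpd. lia. }
    assert (Hw1 : last m' z = par y).
    { destruct Ewy as [[Hw E]|[_ E]]; auto.
      specialize (Hpd _ Hw). assert (Hw' := last_In m' z Hm').
      specialize (Hin _ (or_intror Hw')). rewrite <- E in Hpd. lia. }
    inversion Hnd' as [|? ? _ Hnd2]. inversion Hnd2 as [|? ? Hz _].
    apply Hz. rewrite Hz1, <- Hw1. apply last_In; auto.
Qed.
End GTree.

Module P12.

Section PT.
Variable n : nat.
Hypothesis hn : 2 <= n.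

Definition Xb (p : nat * nat) : bool := (1 <=? fst p) && (fst p <=? n) && (1 <=? snd p).
Definition par (p : nat * nat) : nat * nat :=
  if Xb p then (if fst p =? 1 then (1, snd p - 1) else if snd p =? 1 then (1, 1) else (fst p, snd p - 1))
  else (1, 1).
Definition dep (p : nat * nat) : nat :=
  if Xb p then (if fst p =? 1 then snd p - 1 else snd p) else 1.

Lemma Hpd p : p <> (1, 1) -> dep (par p) + 1 = dep p.
Proof. destruct p as [a m]; unfold dep, par, Xb; crush0. Qed.

Definition ETn := ETg (nat * nat) (1, 1) par.

Lemma ETn_tree : is_tree ETn.
Proof. apply gtree with (dep := dep). apply Hpd. Qed.

Lemma par_X p : Xn n p -> p <> (1, 1) -> Xn n (par p).
Proof. destruct p as [a m]; unfold Xn, par, Xb; crush0. Qed.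

Lemma gen_in_Sgen j : 1 <= j <= n - 1 -> In (gen_g j) (Sgen n).
Proof.
  intros Hj. unfold Sgen. destruct (Nat.eqb_spec n 2) as [->|Hn2].
  - replace j with 1 by lia. left; auto.
  - apply in_map, in_seq; lia.
Qed.

Lemma Ep_sym p q : Ep n p q -> Ep n q p.
Proof. intros (Xp & Xq & s & Hs & H). split; [auto|split; [auto|]]. exists s; split; auto; tauto. Qed.

Lemma Ep_par p : Xn n p -> p <> (1, 1) -> Ep n p (par p).
Proof.
  intros Xp Hp. split; [auto|split; [apply par_X; auto|]].
  destruct p as [a m]. unfold Xn in Xp; simpl in Xp.
  destruct (Nat.eq_dec a 1) as [->|Ha].
  - exists (gen_g 1). split; [apply gen_in_Sgen; lia|right].
    unfold gen_g, par, Xb; crush0.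
  - exists (gen_g (a - 1)). split; [apply gen_in_Sgen; lia|left].
    unfold gen_g, par, Xb; crush0.
Qed.

Lemma E2 p q : Xn n p -> Xn n q -> ETn p q -> Ep n p q.
Proof.
  intros Xp Xq [[Hp ->]|[Hq ->]].
  - apply Ep_par; auto.
  - apply Ep_sym, Ep_par; auto.
Qed.

Lemma ETn_child p q : p <> (1, 1) -> q = par p -> ETn p q.
Proof. intros; left; auto. Qed.

Lemma E1 s x : In s (Sgen n) -> Xn n x -> s x = x \/ ETn x (s x).
Proof.
  intros Hs Xx. destruct x as [a m]. unfold Xn in Xx; simpl in Xx.
  assert (Hs' : (exists i, 1 <= i /\ i + 1 <= n /\ s = gen_g i) \/ s = beta).
  { unfold Sgen in Hs. destruct (Nat.eqb_spec n 2) as [->|Hn2].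
    - destruct Hs as [<-|[<-|[]]]; [left; exists 1; repeat split; lia|right; auto].
    - apply in_map_iff in Hs as (i & <- & Hi). apply in_seq in Hi. left; exists i; repeat split; lia. }
  destruct Hs' as [(i & Hi1 & Hi2 & ->)| ->].
  - unfold gen_g.
    destruct (Nat.eqb_spec a 1) as [->|Ha]; [destruct (Nat.ltb_spec 1 m)|]; cbn [andb].
    + right; apply ETn_child; [intros E; inversion E; lia|unfold par, Xb; crush0].
    + assert (m = 1) as -> by lia. right. apply ETg_sym. apply ETn_child; [intros E; inversion E; lia|unfold par, Xb; crush0].
    + destruct (Nat.eqb_spec a (i + 1)) as [->|Ha2]; cbn [andb].
      * destruct (Nat.leb_spec 1 m); [|lia]. right. apply ETg_sym. apply ETn_child; [intros E; inversion E; lia|unfold par, Xb; crush0].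
      * left; auto.
  - unfold beta. simpl fst; simpl snd.
    destruct (Nat.eqb_spec a 1) as [->|Ha]; destruct (Nat.eqb_spec m 1) as [->|Hm]; cbn [andb].
    + right. apply ETg_sym. apply ETn_child; [intros E; inversion E; lia|unfold par, Xb; crush0].
    + left; auto.
    + destruct (Nat.eqb_spec a 2) as [->|Ha2]; cbn [andb].
      * right. apply ETn_child; [intros E; inversion E; lia|unfold par, Xb; crush0].
      * left; auto.
    + destruct (Nat.eqb_spec a 2); left; auto.
Qed.

Lemma Ep_ET p q : Ep n p q -> p = q \/ ETn p q.
Proof.
  intros (Xp & Xq & s & Hs & [E|E]).
  - destruct (E1 s q Hs Xq) as [E'|E']; [left; congruence|right; apply ETg_sym; rewrite <- E; auto].
  - destruct (E1 s p Hs Xp) as [E'|E']; [left; congruence|right; rewrite <- E; auto].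
Qed.

Lemma Ep_X p q : Ep n p q -> Xn n p /\ Xn n q.
Proof. intros (? & ? & _); auto. Qed.

Lemma ETn_dep p q : ETn p q -> dep q <= dep p + 1.
Proof.
  intros [[Hp ->]|[Hq ->]]; [specialize (Hpd p Hp)|specialize (Hpd q Hq)]; lia.
Qed.

Lemma Ep_dep p q : Ep n p q -> dep q <= dep p + 1.
Proof. intros H. destruct (Ep_ET p q H) as [->|H']; [lia|apply ETn_dep; auto]. Qed.

Lemma ray_edge r m : 1 <= r <= n -> 1 <= m -> Ep n (r, m) (r, S m).
Proof.
  intros Hr Hm. apply Ep_sym.
  replace (r, m) with (par (r, S m)) by (unfold par, Xb; crush0).
  apply Ep_par; [unfold Xn; simpl; lia|intros E; inversion E; lia].
Qed.
End PT.

End P12.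
Import P12.

Section G.
Variable n : nat.
Hypothesis hn : 2 <= n.

Notation cc := (cc n).
Notation SE := (schreier n).
Notation ETn := (ETn n).
Notation par := (par n).
Notation dep := (dep n).

Lemma o_X : Xn n (1, 1).
Proof. unfold Xn; simpl; lia. Qed.

Lemma SE_E C D : SE C D -> exists a b, Xn n a /\ Xn n b /\ C = cc a /\ D = cc b /\ Ep n a b.
Proof.
  intros H. apply schreier_iff in H as (a & b & -> & -> & Hab); auto.
  exists a, b. destruct (Ep_X n a b Hab). split; [auto|split; [auto|split; [auto|split; auto]]].
Qed.

Lemma E_SE a b : Ep n a b -> SE (cc a) (cc b).
Proof. intros H. apply schreier_iff; auto. exists a, b; auto. Qed.

Lemma SE_sym C D : SE C D -> SE D C.
Proof. intros (g & s & Gg & Hs & H). exists g, s; split; [auto|split; [auto|]]. tauto. Qed.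

Lemma ccinj a b : Xn n a -> cc a = cc b -> a = b.
Proof. intros; eapply cc_inj; eauto. Qed.

Lemma walk_pts x y k p : dist_le SE x y k -> Xn n p -> x = cc p ->
  exists q, Xn n q /\ y = cc q /\ dist_le (Ep n) p q k.
Proof.
  intros H Xp E. apply (dist_transfer cc SE (Ep n) (Xn n)) with (x := x); auto.
  - intros C D HCD. destruct (SE_E C D HCD) as (a & b & ? & ? & ? & ? & ?). exists a, b; auto.
  - intros a b Xa _ Eab. apply ccinj; auto.
Qed.

Lemma walk_cc p q k : dist_le (Ep n) p q k -> dist_le SE (cc p) (cc q) k.
Proof. apply dist_le_map. apply E_SE. Qed.

Lemma par_X' z : z <> (1, 1) -> Xn n (par z).
Proof.
  intros Hz. destruct (classic (Xn n z)) as [Xz|Xz]; [apply par_X; auto|].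
  unfold P12.par. replace (Xb n z) with false; [apply o_X|].
  destruct z as [a m]; unfold Xn in Xz; unfold Xb; cbn [fst snd] in *.
  symmetry. apply Bool.not_true_iff_false. intros H. apply Xz.
  rewrite !andb_true_iff, !Nat.leb_le in H. lia.
Qed.

Lemma par_out z : ~ Xn n z -> par z = (1, 1).
Proof.
  intros Xz. unfold P12.par. replace (Xb n z) with false; auto.
  destruct z as [a m]; unfold Xn in Xz; unfold Xb; cbn [fst snd] in *.
  symmetry. apply Bool.not_true_iff_false. intros H. apply Xz.
  rewrite !andb_true_iff, !Nat.leb_le in H. lia.
Qed.

Lemma restrict p q k : dist_le ETn p q k -> Xn n q ->
  (Xn n p -> dist_le (Ep n) p q k) /\ (~ Xn n p -> dist_le (Ep n) (1, 1) q k).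
Proof.
  intros H; induction H as [p k|p z q k Hpz H IH]; intros Xq.
  - split; [constructor|intros; contradiction].
  - destruct (IH Xq) as [IH1 IH2]. split.
    + intros Xp. destruct (classic (Xn n z)) as [Xz|Xz].
      * apply dl_step with z; [apply E2; auto|auto].
      * destruct Hpz as [[Hp Ez]|[Hz Ep']].
        -- exfalso; apply Xz; rewrite Ez; apply par_X'; auto.
        -- rewrite par_out in Ep' by auto. subst p. eapply dist_le_mono; [apply IH2; auto|lia].
    + intros Xp. destruct Hpz as [[Hp Ez]|[Hz Ep']].
      * rewrite par_out in Ez by auto. subst z. eapply dist_le_mono; [apply IH1; apply o_X|lia].
      * exfalso; apply Xp; rewrite Ep'; apply par_X'; auto.
Qed.

Theorem part_qt : quasi_tree (is_coset n) SE.
Proof.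
  assert (fc : forall C, exists p, Xn n p /\ (is_coset n C -> C = cc p)).
  { intros C. destruct (classic (is_coset n C)) as [H|H].
    - apply is_coset_iff in H as (p & Xp & ->); auto. exists p; split; auto.
    - exists (1, 1); split; [apply o_X|tauto]. }
  set (f := fun C => proj1_sig (constructive_indefinite_description _ (fc C))).
  assert (fX : forall C, Xn n (f C)).
  { intros C; unfold f; destruct (constructive_indefinite_description _ _) as (p & ? & ?); auto. }
  assert (fcc : forall p, Xn n p -> f (cc p) = p).
  { intros p Xp. unfold f; destruct (constructive_indefinite_description _ _) as (q & Xq & E); simpl.
    symmetry; apply ccinj; auto. apply E. apply is_coset_iff; auto. exists p; auto. }
  exists (nat * nat)%type, ETn. split; [apply ETn_tree; auto|].
  exists f, 1, 1. split; [auto|split; [|split]].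
  - intros x y k Px Py H. apply is_coset_iff in Px as (p & Xp & ->); auto.
    destruct (walk_pts _ _ _ p H Xp eq_refl) as (q & Xq & -> & Hw).
    rewrite !fcc by auto. apply dist_le_mono with k; [|lia].
    apply (dist_le_loops (Ep n)); auto. intros; apply Ep_ET; auto.
  - intros x y k Px Py H. apply is_coset_iff in Px as (p & Xp & ->); auto.
    apply is_coset_iff in Py as (q & Xq & ->); auto.
    rewrite !fcc in H by auto. apply dist_le_mono with k; [|lia].
    apply walk_cc. apply (restrict p q k H Xq); auto.
  - intros z _. destruct (classic (Xn n z)) as [Xz|Xz].
    + exists (cc z); split; [apply is_coset_iff; auto; exists z; auto|]. rewrite fcc by auto. constructor.
    + exists (cc (1, 1)); split; [apply is_coset_iff; auto; exists (1, 1); split; auto; apply o_X|].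
      rewrite fcc by apply o_X. apply dl_step with (1, 1); [|constructor].
      left. split; [intros ->; apply Xz, o_X|symmetry; apply par_out; auto].
Qed.
End G.

Lemma FOP_map {V} (R : V -> V -> Prop) (g : nat -> V) l :
  NoDup l -> (forall a b, In a l -> In b l -> a <> b -> R (g a) (g b)) -> ForallOrdPairs R (map g l).
Proof.
  induction l as [|a l IH]; simpl; intros Hnd H; constructor.
  - inversion Hnd; subst. apply Forall_forall. intros y Hy. apply in_map_iff in Hy as (b & <- & Hb).
    apply H; auto. intros ->; contradiction.
  - inversion Hnd; subst. apply IH; auto.
Qed.

Lemma f2_in {A B} (R : A -> B -> Prop) xs rs r : Forall2 R xs rs -> In r rs -> exists x, In x xs /\ R x r.
Proof.
  induction 1 as [|x y l l' Hxy H IH]; simpl; [tauto|]. intros [<-|Hin]; [exists x; split; [left|]; auto|].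
  destruct (IH Hin) as (y0 & ? & ?); exists y0; split; [right|]; auto.
Qed.

Lemma f2_nodup {A B} (R : A -> B -> Prop) (Rel : A -> A -> Prop) xs rs :
  Forall2 R xs rs -> ForallOrdPairs Rel xs ->
  (forall x x' r, R x r -> R x' r -> Rel x x' -> False) -> NoDup rs.
Proof.
  intros H; induction H as [|x r xs rs Hxr H IH]; intros Hf Hc; constructor.
  - inversion Hf as [|? ? Hall Hf']; subst. intros Hin.
    destruct (f2_in R xs rs r H Hin) as (x2 & Hx2 & Rx2).
    rewrite Forall_forall in Hall. exact (Hc x x2 r Hxr Rx2 (Hall x2 Hx2)).
  - inversion Hf; subst. apply IH; auto.
Qed.

Lemma f2_ex {A B} (R : A -> B -> Prop) xs : (forall x, In x xs -> exists r, R x r) -> exists rs, Forall2 R xs rs.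
Proof.
  induction xs as [|x xs IH]; intros H; [exists []; constructor|].
  destruct (H x (or_introl eq_refl)) as [r Hr]. destruct IH as [rs Hrs]; [intros; apply H; right; auto|].
  exists (r :: rs); constructor; auto.
Qed.



Section E.
Variable n : nat.
Hypothesis hn : 2 <= n.

Notation cc := (cc n).
Notation SE := (schreier n).
Notation ETn := (ETn n).
Notation par := (par n).
Notation dep := (dep n).

Lemma ray_path (EV : (F -> Prop) -> (F -> Prop) -> Prop) r m j :
  (forall i, i < j -> EV (cc (r, m + i)) (cc (r, m + i + 1))) -> dist_le EV (cc (r, m)) (cc (r, m + j)) j.
Proof.
  induction j as [|j IH]; intros H.
  - rewrite Nat.add_0_r; constructor.
  - apply dist_le_snoc with (cc (r, m + j)); [apply IH; intros; apply H; lia|].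
    replace (m + S j) with (m + j + 1) by lia. apply H; lia.
Qed.

Lemma avoid_ray K r m j : 1 <= r <= n -> 1 <= m -> (forall i, i <= j -> ~ In (cc (r, m + i)) K) ->
  dist_le (avoidE SE K) (cc (r, m)) (cc (r, m + j)) j.
Proof.
  intros Hr Hm H. apply ray_path. intros i Hi. split; [|split; [apply H; lia|]].
  - replace (m + i + 1) with (S (m + i)) by lia. apply (E_SE n hn). apply (ray_edge n hn); lia.
  - replace (m + i + 1) with (m + S i) by lia. apply H; lia.
Qed.

Lemma plain_ray r m j : 1 <= r <= n -> 1 <= m -> dist_le SE (cc (r, m)) (cc (r, m + j)) j.
Proof.
  intros Hr Hm. apply ray_path. intros i Hi.
  replace (m + i + 1) with (S (m + i)) by lia. apply (E_SE n hn). apply (ray_edge n hn); lia.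
Qed.

Lemma avoid_sym K C D : avoidE SE K C D -> avoidE SE K D C.
Proof. intros (H1 & H2 & H3). split; [apply SE_sym; auto|tauto]. Qed.

Lemma avoid_SE K C D : avoidE SE K C D -> SE C D.
Proof. intros [H _]; auto. Qed.

Lemma K_bound K : (forall v, In v K -> is_coset n v) ->
  exists D, forall a, Xn n a -> In (cc a) K -> snd a <= D.
Proof.
  induction K as [|C K IH]; intros HK.
  - exists 0; simpl; tauto.
  - destruct IH as [D HD]; [intros; apply HK; right; auto|].
    destruct (proj1 (is_coset_iff n hn C) (HK C (or_introl eq_refl))) as (p & Xp & ->).
    exists (max (snd p) D). intros a Xa [E|E].
    + apply (ccinj n hn) in E; auto. subst; lia.
    + specialize (HD a Xa E); lia.
Qed.

Definition st (r : nat) : nat * nat := if r =? 1 then (1, 2) else (r, 1).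

Lemma fst_par a : Xn n a -> par a <> (1, 1) -> fst (par a) = fst a.
Proof. destruct a as [x m]; unfold Xn, P12.par, Xb; crush0. Qed.

Lemma EA_fst p q k : dist_le (fun a b => Ep n a b /\ a <> (1, 1) /\ b <> (1, 1)) p q k -> fst q = fst p.
Proof.
  induction 1 as [|x z y k (Hxz & Hx & Hz) H IH]; auto. rewrite IH.
  destruct (Ep_ET n hn x z Hxz) as [->|[[_ E]|[_ E]]]; auto.
  - rewrite E. apply fst_par; [apply (Ep_X n x z Hxz)|congruence].
  - rewrite E. symmetry. apply fst_par; [apply (Ep_X n x z Hxz)|congruence].
Qed.

Theorem part_ends : has_ends (is_coset n) SE n.
Proof.
  split.
  - exists [cc (1, 1)]. split; [intros v [<-|[]]; apply (is_coset_iff n hn); exists (1, 1); split; auto; apply (o_X n hn)|].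
    exists (map (fun r => cc (st r)) (seq 1 n)). split; [rewrite length_map, length_seq; auto|split].
    + intros x Hx. apply in_map_iff in Hx as (r & <- & Hr). apply in_seq in Hr.
      assert (Est : st r = (r, snd (st r))) by (unfold st; destruct (Nat.eqb_spec r 1); subst; auto).
      assert (Xst : Xn n (st r)) by (unfold st, Xn; destruct (Nat.eqb_spec r 1); simpl; lia).
      assert (notK : forall m, snd (st r) <= m -> ~ In (cc (r, m)) [cc (1, 1)]).
      { intros m Hm [E|[]]. apply (ccinj n hn) in E; [|apply (o_X n hn)].
        inversion E; subst. unfold st in Hm. simpl in Hm. lia. }
      split; [apply (is_coset_iff n hn); exists (st r); auto|split].
      * rewrite Est. apply notK; auto.
      * intros (l & Hl).
        set (l' := map (fun j => cc (r, snd (st r) + j)) (seq 0 (S (length l)))).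
        assert (Hnd : NoDup l').
        { apply NoDup_map_inj; [|apply seq_NoDup]. intros a b _ _ E. apply (ccinj n hn) in E.
          - inversion E; lia.
          - unfold Xn; simpl. unfold st in *; destruct (Nat.eqb_spec r 1); simpl; lia. }
        assert (Hinc : incl l' l).
        { intros y Hy. apply in_map_iff in Hy as (j & <- & _). apply Hl. split.
          - rewrite Est; apply notK; auto.
          - exists j. rewrite Est at 1. apply avoid_ray;
              [lia|unfold st; destruct (Nat.eqb_spec r 1); simpl; lia|intros i _; apply notK; lia]. }
        pose proof (NoDup_incl_length Hnd Hinc). unfold l' in H. rewrite length_map, length_seq in H. lia.
    + apply FOP_map; [apply seq_NoDup|]. intros r r' Hr Hr' Hne (Hnot & k & Hk).
      apply in_seq in Hr; apply in_seq in Hr'.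
      assert (Xst : forall r, 1 <= r <= n -> Xn n (st r)) by (intros; unfold st, Xn; destruct (Nat.eqb_spec r0 1); simpl; lia).
      assert (HE : forall C D, avoidE SE [cc (1, 1)] C D -> exists a b, Xn n a /\ Xn n b /\ C = cc a /\ D = cc b /\
                 (fun a b => Ep n a b /\ a <> (1, 1) /\ b <> (1, 1)) a b).
      { intros C D (HCD & HC & HD). destruct (SE_E n hn C D HCD) as (a & b & Xa & Xb' & -> & -> & Hab).
        exists a, b. split; [auto|split; [auto|split; [auto|split; [auto|]]]].
        split; [auto|split; intros ->; [apply HC|apply HD]; left; auto]. }
      assert (Hi : forall a b, Xn n a -> Xn n b -> cc a = cc b -> a = b).
      { intros a b Xa _ E. apply (ccinj n hn); auto. }
      destruct (dist_transfer cc _ _ (Xn n) HE Hi _ _ _ Hk (st r) (Xst r ltac:(lia)) eq_refl) as (q & Xq & Eq & Hw).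
      apply (ccinj n hn) in Eq; [|apply Xst; lia]. subst q. apply EA_fst in Hw.
      unfold st in Hw. destruct (Nat.eqb_spec r 1); destruct (Nat.eqb_spec r' 1); simpl in Hw; lia.
  - intros K HK xs Hxs Hfop.
    destruct (K_bound K HK) as [D HD].
    set (R := fun x r => 1 <= r <= n /\ exists q, Xn n q /\ fst q = r /\ D < snd q /\ comp_of SE K x (cc q)).
    assert (Hex : forall x, In x xs -> exists r, R x r).
    { intros x Hx. destruct (Hxs x Hx) as (Px & xK & Hinf).
      apply (is_coset_iff n hn) in Px as (p & Xp & ->); auto.
      apply NNPP. intros Hno. apply Hinf. exists (map cc (box n D)).
      intros y (_ & k & Hk).
      destruct (walk_pts n hn (cc p) y k p) as (q & Xq & -> & _); auto.
      { apply (dist_le_weaken _ _ _ _ _ (avoid_SE K)); auto. }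
      apply in_map. destruct q as [a m]. apply in_box. unfold Xn in Xq; simpl in Xq.
      split; [lia|]. split; [lia|]. destruct (le_lt_dec m D); auto. exfalso.
      apply Hno. exists a. split; [lia|]. exists (a, m). split; [unfold Xn; auto|].
      split; auto. split; auto. split; auto. exists k; auto. }
    destruct (f2_ex R xs Hex) as [rs Hrs].
    rewrite (Forall2_length Hrs). rewrite <- (length_seq n 1). apply NoDup_incl_length.
    + apply (f2_nodup R (fun x y => ~ comp_of SE K x y) xs rs); auto.
      intros x x' r (Hr & q & Xq & Hq1 & Hq2 & (Hxk & k1 & Hk1)) (_ & q' & Xq' & Hq1' & Hq2' & (Hxk' & k2 & Hk2)) Hnc.
      apply Hnc. split; auto.
      assert (Hnk : forall i, ~ In (cc (r, D + 1 + i)) K).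
      { intros i Hin. apply HD in Hin; [simpl in Hin; lia|unfold Xn; simpl; lia]. }
      assert (Hray : forall m, D < m -> dist_le (avoidE SE K) (cc (r, D + 1)) (cc (r, m)) (m - D - 1)).
      { intros m Hm. replace (cc (r, m)) with (cc (r, D + 1 + (m - D - 1))) by (do 3 f_equal; lia).
        apply avoid_ray; [lia|lia|intros i _; apply Hnk]. }
      destruct q as [r0 m0]; destruct q' as [r1 m1]; simpl in Hq1, Hq2, Hq1', Hq2'; subst r0 r1.
      exists (k1 + (m0 - D - 1) + ((m1 - D - 1) + k2)).
      apply dist_le_trans with (cc (r, D + 1)).
      { apply dist_le_trans with (cc (r, m0)); [auto|]. apply dist_le_sym; [apply avoid_sym|]. apply Hray; auto. }
      apply dist_le_trans with (cc (r, m1)); [apply Hray; auto|].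
      apply dist_le_sym; [apply avoid_sym|auto].
    + intros r Hr. destruct (f2_in R xs rs r Hrs Hr) as (x & _ & Hr' & _). apply in_seq; lia.
Qed.

Lemma dep_walk p q k : dist_le (Ep n) p q k -> dep q <= dep p + k.
Proof.
  induction 1 as [|x z y k Hxz H IH]; [lia|]. pose proof (Ep_dep n hn x z Hxz). lia.
Qed.

Theorem part_growth : linear_growth SE (coset n idF).
Proof.
  rewrite (coset_id n hn). exists n. intros r. split.
  - exists (map (fun j => cc (1, 1 + j)) (seq 0 (S r))). split; [|split].
    + apply NoDup_map_inj; [|apply seq_NoDup]. intros a b _ _ E. apply (ccinj n hn) in E; [inversion E; lia|].
      unfold Xn; simpl; lia.
    + rewrite length_map, length_seq; auto.
    + intros y Hy. apply in_map_iff in Hy as (j & <- & Hj). apply in_seq in Hj.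
      apply dist_le_mono with j; [apply plain_ray; lia|lia].
  - intros l Hnd Hl. rewrite <- (box_length n (S r)), <- (length_map cc).
    apply NoDup_incl_length; auto. intros y Hy.
    destruct (walk_pts n hn (cc (1, 1)) y r (1, 1)) as (q & Xq & -> & Hw); auto; [apply (o_X n hn)|].
    apply in_map. apply dep_walk in Hw.
    destruct q as [a m]. unfold Xn in Xq; simpl in Xq. apply in_box. split; [lia|].
    unfold P12.dep, Xb in Hw. simpl fst in Hw; simpl snd in Hw. revert Hw. crush0.
Qed.
End E.

Definition rot (P j : nat) : F := fun p => let (a, m) := p in
  if (a =? 1) && (1 <=? m) && (m <=? P) then (1, (m - 1 + j) mod P + 1) else p.

Section Rot.
Variable P : nat.
Hypothesis HP : 1 <= P.

Lemma rot_comp j k : comp (rot P j) (rot P k) = rot P (j + k).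
Proof.
  extensionality p. destruct p as [a m]. unfold comp, rot.
  destruct ((a =? 1) && (1 <=? m) && (m <=? P)) eqn:C.
  - rewrite !andb_true_iff, Nat.eqb_eq, !Nat.leb_le in C.
    assert (Hlt : (m - 1 + k) mod P < P) by (apply Nat.mod_upper_bound; lia).
    replace ((1 =? 1) && (1 <=? (m - 1 + k) mod P + 1) && ((m - 1 + k) mod P + 1 <=? P)) with true
      by (symmetry; rewrite !andb_true_iff, Nat.eqb_eq, !Nat.leb_le; lia).
    f_equal. f_equal. replace ((m - 1 + k) mod P + 1 - 1) with ((m - 1 + k) mod P) by lia.
    rewrite Nat.Div0.add_mod_idemp_l. f_equal. lia.
  - rewrite C. reflexivity.
Qed.

Lemma rot_mult k : rot P (k * P) = idF.
Proof.
  extensionality p. destruct p as [a m]. unfold rot, idF.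
  destruct ((a =? 1) && (1 <=? m) && (m <=? P)) eqn:C; auto.
  rewrite !andb_true_iff, Nat.eqb_eq, !Nat.leb_le in C.
  rewrite Nat.Div0.mod_add. rewrite Nat.mod_small by lia. f_equal; lia.
Qed.

Lemma rot_o m : m < P -> rot P m (1, 1) = (1, m + 1).
Proof.
  intros Hm. unfold rot. replace ((1 =? 1) && (1 <=? 1) && (1 <=? P)) with true
    by (symmetry; rewrite !andb_true_iff, Nat.eqb_eq, !Nat.leb_le; lia).
  f_equal. f_equal. rewrite Nat.mod_small; lia.
Qed.

Lemma Gn_rot n j : 1 <= n -> Gn n (rot P j).
Proof.
  intros Hn. split.
  - apply (bij_of_inv n _ (rot P (j * (P - 1)))).
    + intros [a m] Xp. unfold rot.
      destruct ((a =? 1) && (1 <=? m) && (m <=? P)); auto. unfold Xn; simpl; lia.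
    + intros p. change (comp (rot P j) (rot P (j * (P - 1))) p = p).
      rewrite rot_comp. replace (j + j * (P - 1)) with (j * P) by nia. rewrite rot_mult. reflexivity.
    + intros p. change (comp (rot P (j * (P - 1))) (rot P j) p = p).
      rewrite rot_comp. replace (j * (P - 1) + j) with (j * P) by nia. rewrite rot_mult. reflexivity.
    + intros [a m] Xp. unfold rot.
      destruct ((a =? 1) && (1 <=? m) && (m <=? P)) eqn:C; auto.
      rewrite !andb_true_iff, Nat.eqb_eq, !Nat.leb_le in C. exfalso; apply Xp; unfold Xn; simpl; lia.
  - apply transl_EV. exists (fun _ => 0%Z), P. intros i m Hi Hm. unfold rot.
    replace ((i =? 1) && (1 <=? m) && (m <=? P)) with false
      by (symmetry; rewrite !andb_false_iff, !Nat.leb_gt; lia).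
    simpl; split; auto; lia.
Qed.

Lemma pw_rot m k : pw (rot P m) k = rot P (m * k).
Proof.
  induction k; simpl.
  - rewrite Nat.mul_0_r. change 0 with (0 * P). symmetry; apply rot_mult.
  - rewrite IHk, rot_comp. f_equal; lia.
Qed.
End Rot.

Lemma pigeon {A} (tf : nat -> A) (l : list A) N : length l < N -> (forall j, j < N -> In (tf j) l) ->
  exists i j, i < j < N /\ tf i = tf j.
Proof.
  intros Hl H. apply NNPP. intros Hno.
  assert (Hnd : NoDup (map tf (seq 0 N))).
  { apply NoDup_map_inj; [|apply seq_NoDup]. intros a b Ha Hb E. apply in_seq in Ha; apply in_seq in Hb.
    destruct (lt_eq_lt_dec a b) as [[Hab|Hab]|Hab]; auto; exfalso; apply Hno.
    - exists a, b; split; [lia|auto].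
    - exists b, a; split; [lia|auto]. }
  assert (Hinc : incl (map tf (seq 0 N)) l).
  { intros y Hy. apply in_map_iff in Hy as (j & <- & Hj). apply in_seq in Hj. apply H; lia. }
  pose proof (NoDup_incl_length Hnd Hinc). rewrite length_map, length_seq in H0. lia.
Qed.

Theorem part_nvf n : 2 <= n -> ~ virtual_fiber (Gn n) (Hn n).
Proof.
  intros hn (_ & G' & H' & SG & (l & Hl & FI) & SH & _ & _ & _ & (phi & Hom & _ & Ker)).
  destruct SG as (SG1 & SGid & SGc & SGinv).
  set (P := S (length l)).
  assert (HP : 1 <= P) by (unfold P; lia).
  assert (Hex : forall j, exists t, (j < P -> In t l /\ exists h, G' h /\ rot P j = comp h t)).
  { intros j. destruct (FI (rot P j)) as (t & h & Ht & Hh & E); [apply Gn_rot; lia|].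
    exists t; intros _; split; auto. exists h; auto. }
  set (tf := fun j => proj1_sig (constructive_indefinite_description _ (Hex j))).
  assert (Htf : forall j, j < P -> In (tf j) l /\ exists h, G' h /\ rot P j = comp h (tf j)).
  { intros j Hj. unfold tf. destruct (constructive_indefinite_description _ _) as (t & Ht); simpl; auto. }
  destruct (pigeon tf l P) as (i & j & Hij & Etf); [unfold P; lia|intros; apply Htf; auto|].
  destruct (Htf i ltac:(lia)) as (Hti & hi & Ghi & Ei).
  destruct (Htf j ltac:(lia)) as (Htj & hj & Ghj & Ej).
  set (t := tf i). fold t in Ei. rewrite <- Etf in Ej. fold t in Ej.
  set (v := comp t (rot P (P - i))).
  assert (Gt : Gn n t) by (apply Hl; auto).
  assert (Gv : Gn n v) by (apply Gn_comp; auto; apply Gn_rot; lia).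
  assert (Ev : comp hi v = idF).
  { unfold v. change (comp (comp hi t) (rot P (P - i)) = idF). rewrite <- Ei, rot_comp by auto.
    replace (i + (P - i)) with (1 * P) by lia. apply rot_mult; auto. }
  assert (G'v : G' v) by (apply (SGinv hi v); auto).
  set (m := j - i).
  assert (Em : comp hj v = rot P m).
  { unfold v. change (comp (comp hj t) (rot P (P - i)) = rot P m). rewrite <- Ej, rot_comp by auto.
    replace (j + (P - i)) with (m + 1 * P) by (unfold m; lia).
    rewrite <- rot_comp by auto. rewrite rot_mult by auto. reflexivity. }
  assert (G'm : G' (rot P m)) by (rewrite <- Em; apply SGc; auto).
  assert (Gpw : forall k, G' (pw (rot P m) k)).
  { induction k; simpl; [auto|apply SGc; auto]. }
  assert (phi0 : phi idF = 0%Z).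
  { assert (E := Hom idF idF SGid SGid). change (comp idF idF) with idF in E. lia. }
  assert (Hphi : forall k, phi (pw (rot P m) k) = (Z.of_nat k * phi (rot P m))%Z).
  { induction k.
    - change (pw (rot P m) 0) with idF. rewrite phi0; ring.
    - change (pw (rot P m) (S k)) with (comp (rot P m) (pw (rot P m) k)). rewrite Hom by auto.
      rewrite IHk, Nat2Z.inj_succ; ring. }
  assert (E0 : phi (rot P m) = 0%Z).
  { specialize (Hphi P). rewrite pw_rot in Hphi by auto. rewrite rot_mult in Hphi by auto.
    rewrite phi0 in Hphi. symmetry in Hphi. apply Z.mul_eq_0 in Hphi as [Hz|Hz]; auto. unfold P in Hz; lia. }
  apply Ker in E0; auto.
  destruct SH as (SH1 & _). apply SH1 in E0. destruct E0 as [_ Eo].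
  rewrite rot_o in Eo by (unfold m; lia). inversion Eo. unfold m in *; lia.
Qed.

Theorem mainTheorem16 (n : nat) (hn : 2 <= n) :
  fin_gen (Hn n) /\
  group_iso (Hn n) (Gn n) /\
  (forall f, Gn n f ->
     Hn n f \/ exists h1 h2, Hn n h1 /\ Hn n h2 /\ f = comp h1 (comp (gen_g 1) h2)) /\
  quasi_tree (is_coset n) (schreier n) /\
  has_ends (is_coset n) (schreier n) n /\
  linear_growth (schreier n) (coset n idF) /\
  ~ virtual_fiber (Gn n) (Hn n).
Proof.
  split; [apply part_fin_gen; auto|].
  split; [apply part_iso; auto|].
  split; [intros f Gf; apply part_dc; auto|].
  split; [apply part_qt; auto|].
  split; [apply part_ends; auto|].
  split; [apply part_growth; auto|].
  apply part_nvf; auto.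
Qed.
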